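(* Let $k\in\frac12+\mathbb Z$ with $k>\frac52$, $N\in4\mathbb N$, and $f\in S_k(\Gamma_0^*(N))$. For real $x>0$ put $\psi(x):=\int_0^{i\infty}f(w)(w-x)^{k-2}\,dw$. Let $P_{k-2}$ be the polynomial $$P_{k-2}(z)=i^{k-1}\sum_{n=0}^{k-5/2}\left[\binom{k-2}{n}N^n\Lambda_f(k-1-n)+\binom{k-2}{n+\frac12}N^{k-n-\frac{11}{4}}\,i^{2n-k+\frac12}\,\Lambda_f\!\left(k-\tfrac32-n\right)\right]z^n.$$ Then there is a constant $C$ such that for all $x>1$, $$\left|P_{k-2}(ix)-\psi(Nx)+i^{1-2k}\,\psi(1/x)\,(\sqrt N x)^{k-\frac52}\right|\le C\,x^{k-\frac32}.$$
   Context: All complex powers use the principal branch of the logarithm ($-\pi<\arg\le\pi$), so $i^t=e^{i\pi t/2}$ for real $t$; $\binom{z}{w}:=\frac{\Gamma(z+1)}{\Gamma(w+1)\Gamma(z-w+1)}$. For odd $d$, $\epsilon_d=1$ if $d\equiv 1\pmod 4$, $\epsilon_d=i$ if $d\equiv3\pmod4$. For $\gamma=\begin{pmatrix}*&*\\c&d\end{pmatrix}\in\Gamma_0(N)$, $(f|_k\gamma)(z)=\left(\frac cd\right)\epsilon_d^{2k}(cz+d)^{-k}f(\gamma z)$ (Kronecker symbol), and $(f|_kW_N)(z)=(-i\sqrt Nz)^{-k}f(-1/(Nz))$. $S_k(\Gamma_0^*(N))$ is the space of holomorphic cusp forms $f$ with $f|_k\gamma=f$ for all $\gamma\in\Gamma_0(N)$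 and $f|_kW_N=f$. $\Lambda_f(s)=\int_0^\infty f(it)t^{s-1}dt$ (entire continuation). ($P_{k-2}$ is the polynomial $P_a$ of Theorem 3.1 for $a=k-2$, i.e. $\int_0^{i\infty}f(w)\Phi_{k-2}(z,w)dw$.) *)

(* Defs.v *)
From Stdlib Require Import Reals ZArith.
From Coquelicot Require Import Coquelicot.
From mathcomp Require Import ssreflect ssrbool ssrnat seq div prime.

Open Scope R_scope.

(* principal argument, in (-PI, PI] *)
Definition Carg (z : C) : R :=
  let x := fst z in let y := snd z in
  if Rlt_dec 0 x then atan (y / x)
  else if Rlt_dec x 0 then
    (if Rle_dec 0 y then atan (y / x) + PI else atan (y / x) - PI)
  else if Rlt_dec 0 y then PI / 2
  else if Rlt_dec y 0 then - (PI / 2) else 0.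

(* z^a := exp(a Log z) with the principal branch, for real a; 0^a := 0 *)
Definition cpow (z : C) (a : R) : C :=
  if Req_EM_T (Cmod z) 0 then RtoC 0
  else Cmult (RtoC (Rpower (Cmod z) a)) (cos (a * Carg z), sin (a * Carg z)).

Definition improper_0_oo (g : R -> C) : C :=
  RInt_gen (V := C_R_CompleteNormedModule) g (at_right 0) (Rbar_locally p_infty).

Definition Gamma (x : R) : R :=
  RInt_gen (V := R_CompleteNormedModule) (fun t => Rpower t (x - 1) * exp (- t)) (at_right 0) (Rbar_locally p_infty).

Definition binom (z w : R) : R :=
  Gamma (z + 1) / (Gamma (w + 1) * Gamma (z - w + 1)).

Definition legendre (a : Z) (p : nat) : Z :=
  let r := Z.to_nat (Z.modulo a (Z.of_nat p)) in
  if eqn r 0 then 0%Z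
  else if has (fun x => eqn (modn (x * x)%N p) r) (iota 0 p) then 1%Z else (-1)%Z.

Definition jacobi (a : Z) (n : nat) : Z :=
  foldr (fun p acc => (legendre a p ^ Z.of_nat (logn p n) * acc)%Z) 1%Z (primes n).

(* Kronecker symbol (c/d) for d odd: (c/-1) = -1 if c < 0, else 1 *)
Definition kronecker (c d : Z) : Z :=
  let j := jacobi c (Z.abs_nat d) in
  if (d <? 0)%Z && (c <? 0)%Z then (- j)%Z else j.

Definition eps (d : Z) : C :=
  if (Z.modulo d 4 =? 1)%Z then RtoC 1 else Ci.

Definition upper (z : C) : Prop := 0 < snd z.

Definition mob (a b c d : Z) (z : C) : C :=
  Cdiv (Cplus (Cmult (IZR a) z) (IZR b)) (Cplus (Cmult (IZR c) z) (IZR d)).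

Definition slash (k : R) (f : C -> C) (a b c d : Z) (z : C) : C :=
  Cmult (Cmult (RtoC (IZR (kronecker c d))) (cpow (eps d) (2 * k)))
        (Cmult (cpow (Cplus (Cmult (IZR c) z) (IZR d)) (- k)) (f (mob a b c d z))).

Definition slashW (k : R) (N : nat) (f : C -> C) (z : C) : C :=
  Cmult (cpow (Cmult (Cmult (Copp Ci) (RtoC (sqrt (INR N)))) z) (- k))
        (f (Copp (Cinv (Cmult (RtoC (INR N)) z)))).

Definition in_Gamma0 (N : nat) (a b c d : Z) : Prop :=
  (a * d - b * c = 1)%Z /\ Z.divide (Z.of_nat N) c.

Definition cusp_form_star (k : R) (N : nat) (f : C -> C) : Prop :=
  (forall z, upper z -> ex_derive (K := C_AbsRing) (V := C_NormedModule) f z) /\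
  (forall a b c d, in_Gamma0 N a b c d ->
     forall z, upper z -> slash k f a b c d z = f z) /\
  (forall z, upper z -> slashW k N f z = f z) /\
  (* vanishes at every cusp: for every gamma in SL_2(Z),
     (cz+d)^(-k) f(gamma z) -> 0 as Im z -> oo, uniformly in Re z *)
  (forall a b c d, (a * d - b * c = 1)%Z ->
     forall e, 0 < e -> exists Y, forall z, Y < snd z ->
       Cmod (Cmult (cpow (Cplus (Cmult (IZR c) z) (IZR d)) (- k))
                   (f (mob a b c d z))) < e).

Definition Lambda (f : C -> C) (s : R) : C :=
  improper_0_oo (fun t => Cmult (f (0, t)) (RtoC (Rpower t (s - 1)))).

(* psi(x) = int_0^{i oo} f(w) (w - x)^(k-2) dw = i int_0^oo f(it) (it - x)^(k-2) dt *)
Definition psi (k : R) (f : C -> C) (x : R) : C :=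
  Cmult Ci (improper_0_oo (fun t => Cmult (f (0, t)) (cpow (Cminus (0, t) (RtoC x)) (k - 2)))).

(* P_{k-2}(z), where k = m + 1/2, so that k - 5/2 = m - 2 *)
Definition Pk2 (k : R) (m N : nat) (f : C -> C) (z : C) : C :=
  Cmult (cpow Ci (k - 1))
   (sum_n (G := C_AbelianMonoid) (fun n =>
      Cmult (Cplus
        (Cmult (RtoC (binom (k - 2) (INR n) * Rpower (INR N) (INR n)))
               (Lambda f (k - 1 - INR n)))
        (Cmult (Cmult (RtoC (binom (k - 2) (INR n + /2) * Rpower (INR N) (k - INR n - 11/4)))
                      (cpow Ci (2 * INR n - k + /2)))
               (Lambda f (k - 3/2 - INR n))))
        (Cpow z n)) (m - 2)).

(* Main.v *)
Require Import Defs.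
From Stdlib Require Import Reals ZArith Lra Psatz Lia.
From Coquelicot Require Import Coquelicot.
Open Scope R_scope.

Lemma Cmod_fst_le (z : C) : Rabs (fst z) <= Cmod z.
Proof. destruct z as [x y]; unfold Cmod; simpl.
  rewrite <- sqrt_Rsqr_abs. apply sqrt_le_1_alt. unfold Rsqr; nra. Qed.
Lemma Cmod_snd_le (z : C) : Rabs (snd z) <= Cmod z.
Proof. destruct z as [x y]; unfold Cmod; simpl.
  rewrite <- sqrt_Rsqr_abs. apply sqrt_le_1_alt. unfold Rsqr; nra. Qed.
Lemma Cmod_le_sum (z : C) : Cmod z <= Rabs (fst z) + Rabs (snd z).
Proof. destruct z as [x y]; unfold Cmod; simpl.
  apply Rsqr_incr_0_var. 2: apply Rplus_le_le_0_compat; apply Rabs_pos.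
  rewrite Rsqr_sqrt. 2: nra. unfold Rsqr.
  assert (x*x = Rabs x * Rabs x) by (rewrite <- Rabs_mult; rewrite Rabs_right; nra).
  assert (y*y = Rabs y * Rabs y) by (rewrite <- Rabs_mult; rewrite Rabs_right; nra).
  pose proof (Rabs_pos x); pose proof (Rabs_pos y). nra. Qed.

Lemma normCR (z : C) : @norm R_AbsRing C_R_NormedModule z = Cmod z.
Proof. destruct z as [x y]. unfold norm. simpl. unfold prod_norm, Cmod. simpl.
  f_equal. change (norm x) with (Rabs x). change (norm y) with (Rabs y).
  rewrite !Rmult_1_r, <- !Rabs_mult. rewrite (Rabs_right (x*x)) by nra. rewrite (Rabs_right (y*y)) by nra. reflexivity. Qed.

Lemma normCC (z : C) : @norm C_AbsRing C_NormedModule z = Cmod z.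
Proof. reflexivity. Qed.

Lemma scalCR (r : R) (z : C) : @scal R_Ring C_R_ModuleSpace r z = Cmult (RtoC r) z.
Proof. destruct z as [x y]. unfold scal; simpl. unfold Cmult, RtoC; simpl.
  unfold prod_scal; simpl. change (scal r x) with (r * x). change (scal r y) with (r*y). f_equal; ring. Qed.

Lemma ballC (z w : C) (e : R) : @ball (prod_UniformSpace R_UniformSpace R_UniformSpace) z e w <->
   (Rabs (fst w - fst z) < e /\ Rabs (snd w - snd z) < e).
Proof. destruct z, w. simpl. unfold ball; simpl. unfold prod_ball; simpl.
  unfold ball; simpl. unfold AbsRing_ball, abs, minus, plus, opp; simpl. tauto. Qed.

Definition Cdiff (H : C -> C) (z l : C) := forall eps, 0 < eps -> exists del, 0 < del /\
  forall w, Cmod (Cminus w z) < del -> Cmod (Cminus (Cminus (H w) (H z)) (Cmult l (Cminus w z))) <= eps * Cmod (Cminus w z).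

Definition Ccont (H : C -> C) (z : C) := forall eps, 0 < eps -> exists del, 0 < del /\
  forall w, Cmod (Cminus w z) < del -> Cmod (Cminus (H w) (H z)) < eps.

Lemma exp_rem (u : R) : Rabs u <= /2 -> 0 <= exp u - 1 - u <= 2 * u^2.
Proof. intros Hu. split. { pose proof (exp_ineq1_le u); lra. }
  pose proof (exp_ineq1_le (-u)) as H1.
  assert (Hp: 0 < 1 - u) by (apply Rabs_le_between in Hu; lra).
  assert (He : exp u * exp (-u) = 1) by (rewrite <- exp_plus; replace (u + -u) with 0 by ring; apply exp_0).
  pose proof (exp_pos u).
  assert (exp u * (1 - u) <= 1) by nra.
  apply Rabs_le_between in Hu.
  assert (exp u <= 1 + u + 2*u^2).
  { apply Rmult_le_reg_r with (1 - u); [lra|]. nra. }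
  lra. Qed.

Lemma cos_rem (v : R) : Rabs v <= /2 -> Rabs (cos v - 1) <= v^2 / 2.
Proof. intros Hv. apply Rabs_le_between in Hv.
  pose proof PI2_3_2.
  destruct (COS v) as [H1 H2]; try lra.
  assert (cos v <= 1) by (destruct (COS_bound v); lra).
  replace (cos_lb v) with (1 - v^2/2 + v^4/24 - v^6/720) in H1
    by (unfold cos_lb, cos_approx, cos_term; simpl; field).
  rewrite Rabs_left1 by lra.
  assert (v^2 <= /4) by nra.
  assert (0 <= v^2) by nra.
  assert (v^6 = v^4 * v^2) by ring. assert (v^4 = v^2*v^2) by ring.
  nra. Qed.

Lemma sin_rem_pos (v : R) : 0 <= v <= /2 -> Rabs (sin v - v) <= v^2.
Proof. intros Hv. pose proof PI2_3_2.
  destruct (SIN v) as [H1 H2]; try lra.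
  replace (sin_lb v) with (v - v^3/6 + v^5/120 - v^7/5040) in H1
    by (unfold sin_lb, sin_approx, sin_term; simpl; field).
  assert (sin v <= v). { destruct (Req_dec v 0). subst; rewrite sin_0; lra. pose proof (sin_lt_x v); lra. }
  assert (0 <= v^2 <= /4) by nra.
  assert (v^3 = v * v^2) by ring. assert (v^5 = v^3*v^2) by ring.
  assert (v^7 = v^5 * v^2) by ring.
  assert (0 <= v^3) by nra. assert (0 <= v^5) by nra. assert (0 <= v^7) by nra.
  rewrite Rabs_left1 by nra. nra. Qed.

Lemma sin_rem (v : R) : Rabs v <= /2 -> Rabs (sin v - v) <= v^2.
Proof. intros Hv. destruct (Rle_dec 0 v).
  - apply sin_rem_pos. apply Rabs_le_between in Hv; lra.
  - replace (sin v - v) with (- (sin (-v) - (-v))) by (rewrite sin_neg; ring).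
    rewrite Rabs_Ropp. replace (v^2) with ((-v)^2) by ring. apply sin_rem_pos.
    apply Rabs_le_between in Hv; lra. Qed.

Definition Cexp (w : C) : C := (exp (fst w) * cos (snd w), exp (fst w) * sin (snd w)).

Lemma Cexp_add w1 w2 : Cexp (Cplus w1 w2) = Cmult (Cexp w1) (Cexp w2).
Proof. destruct w1 as [a b], w2 as [c d]. unfold Cexp, Cplus, Cmult; simpl.
  rewrite exp_plus, cos_plus, sin_plus. f_equal; ring. Qed.

Lemma Cmod_Cexp w : Cmod (Cexp w) = exp (fst w).
Proof. destruct w as [a b]. unfold Cexp, Cmod. cbn [fst snd].
  replace ((exp a * cos b) ^ 2 + (exp a * sin b) ^ 2) with (exp a ^ 2)
   by (pose proof (sin2_cos2 b); unfold Rsqr in *; nra).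
  rewrite sqrt_pow2; [reflexivity| left; apply exp_pos]. Qed.

Lemma Cmod_pair_le (a b : R) : Cmod (a, b) <= Rabs a + Rabs b.
Proof. apply (Cmod_le_sum (a,b)). Qed.

Lemma Cexp_rem h : Cmod h <= /2 -> Cmod (Cminus (Cminus (Cexp h) (RtoC 1)) h) <= 8 * Cmod h ^ 2.
Proof. intros Hh. destruct h as [u v].
  pose proof (Cmod_fst_le (u,v)) as Hu. pose proof (Cmod_snd_le (u,v)) as Hv. simpl in Hu, Hv.
  set (m := Cmod (u,v)) in *.
  assert (Hu2 : Rabs u <= /2) by lra. assert (Hv2 : Rabs v <= /2) by lra.
  destruct (exp_rem u Hu2) as [E1 E2]. pose proof (cos_rem v Hv2) as Co. pose proof (sin_rem v Hv2) as Si.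
  unfold Cexp, Cminus, Cplus, Copp, RtoC; simpl.
  eapply Rle_trans. apply Cmod_pair_le.
  assert (HA : Rabs (exp u * cos v + - (1) + - u) <= 3 * m^2).
  { replace (exp u * cos v + - (1) + - u) with ((exp u - 1 - u) * cos v + (1+u)*(cos v - 1)) by ring.
    eapply Rle_trans. apply Rabs_triang. rewrite !Rabs_mult.
    assert (Rabs (cos v) <= 1) by (apply Rabs_le; apply COS_bound).
    assert (Rabs (1+u) <= 3/2) by (apply Rabs_le; apply Rabs_le_between in Hu2; lra).
    assert (Rabs (exp u - 1 - u) <= 2*u^2) by (rewrite Rabs_right; lra).
    assert (u^2 <= m^2). { rewrite <- (pow2_abs u). apply pow_incr. split; [apply Rabs_pos|lra]. }
    assert (v^2 <= m^2). { rewrite <- (pow2_abs v). apply pow_incr. split; [apply Rabs_pos|lra]. }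
    pose proof (Rabs_pos (cos v)). pose proof (Rabs_pos (1+u)). pose proof (Rabs_pos (cos v - 1)).
    pose proof (Rabs_pos (exp u - 1 - u)).
    nra. }
  assert (HB : Rabs (exp u * sin v + - 0 + - v) <= 5 * m^2).
  { replace (exp u * sin v + - 0 + - v) with ((exp u - 1) * sin v + (sin v - v)) by ring.
    eapply Rle_trans. apply Rabs_triang. rewrite !Rabs_mult.
    assert (Rabs (exp u - 1) <= 2 * Rabs u).
    { replace (exp u - 1) with (u + (exp u - 1 - u)) by ring. eapply Rle_trans. apply Rabs_triang.
      rewrite (Rabs_right (exp u - 1 - u)) by lra. rewrite <- (pow2_abs u) in E2. pose proof (Rabs_pos u). nra. }
    assert (Rabs (sin v) <= 2 * Rabs v).
    { replace (sin v) with (v + (sin v - v)) by ring. eapply Rle_trans. apply Rabs_triang.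
      rewrite <- (pow2_abs v) in Si. pose proof (Rabs_pos v). nra. }
    assert (v^2 <= m^2). { rewrite <- (pow2_abs v). apply pow_incr. split; [apply Rabs_pos|lra]. }
    pose proof (Rabs_pos u). pose proof (Rabs_pos v). pose proof (Rabs_pos (sin v)). pose proof (Rabs_pos (exp u - 1)).
    assert (Rabs (exp u - 1) * Rabs (sin v) <= (2*Rabs u)*(2*Rabs v)) by (apply Rmult_le_compat; lra).
    assert (Rabs u * Rabs v <= m * m) by (apply Rmult_le_compat; lra).
    rewrite <- (pow2_abs v) in Si. 
    assert (m^2 = m*m) by ring. nra. }
  assert (m^2 = m*(m*1)) by ring. lra. Qed.

Definition CDer (H : C -> C) (z l : C) := @is_derive C_AbsRing (AbsRing_NormedModule C_AbsRing) H z l.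

Lemma ballCmod (z w : C) (e : R) : Cmod (Cminus w z) < e -> @ball (AbsRing_UniformSpace C_AbsRing) z e w.
Proof. intros H. exact H. Qed.

Lemma ball_Cmod (z w : C) (e : R) : @ball (AbsRing_UniformSpace C_AbsRing) z e w -> Cmod (Cminus w z) < 2 * e.
Proof. intros H. change (Cmod (Cminus w z) < e) in H. pose proof (Cmod_ge_0 (Cminus w z)). lra. Qed.

Lemma CDer_Cdiff H z l : CDer H z l -> Cdiff H z l.
Proof. intros [_ Hd]. specialize (Hd z (fun P HP => HP)).
  intros eps Heps. destruct (Hd (mkposreal eps Heps)) as [d Hdd].
  exists d. split. apply cond_pos. intros w Hw. specialize (Hdd w (ballCmod z w d Hw)).
  change (Cmod (Cminus (Cminus (H w) (H z)) (Cmult (Cminus w z) l)) <= eps * Cmod (Cminus w z)) in Hdd.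
  rewrite (Cmult_comm l (Cminus w z)). exact Hdd. Qed.

Lemma Cdiff_CDer H z l : Cdiff H z l -> CDer H z l.
Proof. intros Hd. split. apply is_linear_scal_l.
  intros x Hx. apply (@is_filter_lim_locally_unique C_AbsRing (AbsRing_NormedModule C_AbsRing)) in Hx. subst x.
  intros eps. destruct (Hd eps (cond_pos eps)) as [d [Hd0 Hdd]].
  exists (mkposreal (d/2) ltac:(lra)). intros w Hw. apply ball_Cmod in Hw. simpl in Hw.
  specialize (Hdd w ltac:(lra)).
  change (Cmod (Cminus (Cminus (H w) (H z)) (Cmult (Cminus w z) l)) <= eps * Cmod (Cminus w z)).
  rewrite (Cmult_comm (Cminus w z) l). exact Hdd. Qed.

Lemma Cdiff_cont H z l : Cdiff H z l -> Ccont H z.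
Proof. intros Hd eps Heps. destruct (Hd 1 Rlt_0_1) as [d [Hd0 Hdd]].
  exists (Rmin d (eps / (Cmod l + 2))). split.
  { apply Rmin_pos; auto. apply Rdiv_lt_0_compat; auto. pose proof (Cmod_ge_0 l); lra. }
  intros w Hw. pose proof (Rmin_l d (eps / (Cmod l + 2))). pose proof (Rmin_r d (eps / (Cmod l + 2))).
  specialize (Hdd w ltac:(lra)).
  replace (Cminus (H w) (H z)) with (Cplus (Cminus (Cminus (H w) (H z)) (Cmult l (Cminus w z))) (Cmult l (Cminus w z))) by ring.
  eapply Rle_lt_trans. apply Cmod_triangle. rewrite Cmod_mult.
  pose proof (Cmod_ge_0 l). pose proof (Cmod_ge_0 (Cminus w z)).
  assert (Cmod (Cminus w z) * (Cmod l + 2) < eps).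
  { apply Rlt_le_trans with (eps / (Cmod l + 2) * (Cmod l + 2)). apply Rmult_lt_compat_r; lra.
    right; field; lra. }
  nra. Qed.

Lemma Cdiff_exp z : Cdiff Cexp z (Cexp z).
Proof. intros eps Heps. pose proof (exp_pos (fst z)) as Hez.
  set (d := Rmin (/2) (eps / (8 * exp (fst z) + 1))).
  assert (Hd1 : d <= /2) by apply Rmin_l. assert (Hd2 : d <= eps / (8 * exp (fst z) + 1)) by apply Rmin_r.
  assert (Hd0 : 0 < d). { apply Rmin_pos. lra. apply Rdiv_lt_0_compat; lra. }
  exists d. split; auto. intros w Hw.
  set (h := Cminus w z) in *.
  replace (Cminus (Cminus (Cexp w) (Cexp z)) (Cmult (Cexp z) h)) with
      (Cmult (Cexp z) (Cminus (Cminus (Cexp h) (RtoC 1)) h)).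
  2: { replace w with (Cplus z h) at 1 by (unfold h; ring). rewrite Cexp_add. ring. }
  rewrite Cmod_mult, Cmod_Cexp. pose proof (Cexp_rem h ltac:(lra)).
  pose proof (Cmod_ge_0 h).
  assert (Cmod h * (8 * exp (fst z) + 1) <= eps).
  { apply Rle_trans with (eps / (8 * exp (fst z) + 1) * (8 * exp (fst z) + 1)).
    apply Rmult_le_compat_r; lra. right; field; lra. }
  apply Rle_trans with (exp (fst z) * (8 * Cmod h ^ 2)). apply Rmult_le_compat_l; lra.
  nra. Qed.

Lemma Cmod_Cinv z : z <> RtoC 0 -> Cmod (Cinv z) = / Cmod z.
Proof. intros Hz. apply Cmod_inv. exact Hz. Qed.

Lemma Cmod_pos_ne z : 0 < Cmod z -> z <> RtoC 0.
Proof. intros H E. rewrite E, Cmod_0 in H. lra. Qed.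

Lemma Cmod_rev_tri a b : Cmod a - Cmod b <= Cmod (Cminus a b).
Proof. pose proof (Cmod_triangle (Cminus a b) b). replace (Cplus (Cminus a b) b) with a in H by ring. lra. Qed.

Lemma Cdiff_inv z : z <> RtoC 0 -> Cdiff Cinv z (Copp (Cinv (Cmult z z))).
Proof. intros Hz eps Heps.
  assert (Hmz : 0 < Cmod z) by (apply Cmod_gt_0; exact Hz).
  set (d := Rmin (Cmod z / 2) (eps * Cmod z ^ 3 / 2)).
  assert (Hd1 : d <= Cmod z / 2) by apply Rmin_l. assert (Hd2 : d <= eps * Cmod z ^ 3 / 2) by apply Rmin_r.
  assert (Hd0 : 0 < d). { apply Rmin_pos. lra. apply Rdiv_lt_0_compat; [|lra]. apply Rmult_lt_0_compat; auto. apply pow_lt; auto. }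
  exists d. split; auto. intros w Hw.
  pose proof (Cmod_rev_tri z w).
  assert (Cmod (Cminus z w) = Cmod (Cminus w z)) by (rewrite <- Cmod_opp; f_equal; ring).
  assert (Hw0 : Cmod z / 2 <= Cmod w) by lra.
  assert (Hwn : w <> RtoC 0) by (apply Cmod_pos_ne; lra).
  replace (Cminus (Cminus (Cinv w) (Cinv z)) (Cmult (Copp (Cinv (Cmult z z))) (Cminus w z)))
    with (Cmult (Cmult (Cminus w z) (Cminus w z)) (Cinv (Cmult (Cmult z z) w))) by (field; split; auto).
  rewrite Cmod_mult, Cmod_mult, Cmod_Cinv, !Cmod_mult.
  2: { apply Cmod_pos_ne. rewrite !Cmod_mult. apply Rmult_lt_0_compat; [nra|lra]. }
  pose proof (Cmod_ge_0 (Cminus w z)) as Hh0. set (h := Cmod (Cminus w z)) in *.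
  set (m := Cmod z) in *. set (mw := Cmod w) in *.
  assert (Hpos : 0 < m * m * mw) by (apply Rmult_lt_0_compat; [nra|lra]).
  apply Rle_trans with (h * h * / (m * m * (m/2))).
  { apply Rmult_le_compat_l. nra. apply Rinv_le_contravar. nra. apply Rmult_le_compat_l; nra. }
  assert (Heq : h * h * / (m * m * (m / 2)) = h * (2 * h / m^3)) by (field; lra).
  rewrite Heq. rewrite (Rmult_comm eps h). apply Rmult_le_compat_l; auto.
  apply Rle_trans with (2 * (eps * m ^ 3 / 2) / m ^3). 
  { unfold Rdiv. apply Rmult_le_compat_r. left; apply Rinv_0_lt_compat, pow_lt; auto. lra. }
  right. field. lra. Qed.

Definition CRInt (g : R -> C) (a b : R) : C := @RInt C_R_CompleteNormedModule g a b.
Definition CexRInt (g : R -> C) (a b : R) : Prop := @ex_RInt C_R_NormedModule g a b.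

Lemma Ccont_hcont (H : C -> C) (x y : R) : Ccont H (x, y) ->
  @continuous R_UniformSpace C_R_NormedModule (fun t => H (t, y)) x.
Proof. intros Hc. unfold continuous. apply filterlim_locally. intros eps.
  destruct (Hc eps (cond_pos eps)) as [d [Hd0 Hd]].
  exists (mkposreal d Hd0). intros t Ht. specialize (Hd (t, y)).
  change (Rabs (t + - x) < d) in Ht.
  assert (Cmod (Cminus (t,y) (x,y)) < d).
  { eapply Rle_lt_trans. apply Cmod_le_sum. simpl. replace (y + - y) with 0 by ring. rewrite Rabs_R0. lra. }
  specialize (Hd H0). pose proof (Cmod_fst_le (Cminus (H (t,y)) (H (x,y)))).
  pose proof (Cmod_snd_le (Cminus (H (t,y)) (H (x,y)))).
  simpl in *. split.
  change (Rabs (fst (H (t,y)) + - fst (H (x,y))) < eps). lra.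
  change (Rabs (snd (H (t,y)) + - snd (H (x,y))) < eps). lra. Qed.

Lemma Ccont_vcont (H : C -> C) (x y : R) : Ccont H (x, y) ->
  @continuous R_UniformSpace C_R_NormedModule (fun t => H (x, t)) y.
Proof. intros Hc. unfold continuous. apply filterlim_locally. intros eps.
  destruct (Hc eps (cond_pos eps)) as [d [Hd0 Hd]].
  exists (mkposreal d Hd0). intros t Ht. specialize (Hd (x, t)).
  change (Rabs (t + - y) < d) in Ht.
  assert (Cmod (Cminus (x,t) (x,y)) < d).
  { eapply Rle_lt_trans. apply Cmod_le_sum. simpl. replace (x + - x) with 0 by ring. rewrite Rabs_R0. lra. }
  specialize (Hd H0). pose proof (Cmod_fst_le (Cminus (H (x,t)) (H (x,y)))).
  pose proof (Cmod_snd_le (Cminus (H (x,t)) (H (x,y)))).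
  simpl in *. split.
  change (Rabs (fst (H (x,t)) + - fst (H (x,y))) < eps). lra.
  change (Rabs (snd (H (x,t)) + - snd (H (x,y))) < eps). lra. Qed.

Lemma ex_hseg (H : C -> C) a b y : a <= b -> (forall x, a <= x <= b -> Ccont H (x, y)) ->
  CexRInt (fun t => H (t, y)) a b.
Proof. intros Hab Hc. apply (@ex_RInt_continuous C_R_CompleteNormedModule).
  intros z Hz. rewrite Rmin_left, Rmax_right in Hz by lra. apply Ccont_hcont, Hc; lra. Qed.

Lemma ex_vseg (H : C -> C) x c d : c <= d -> (forall y, c <= y <= d -> Ccont H (x, y)) ->
  CexRInt (fun t => H (x, t)) c d.
Proof. intros Hab Hc. apply (@ex_RInt_continuous C_R_CompleteNormedModule).
  intros z Hz. rewrite Rmin_left, Rmax_right in Hz by lra. apply Ccont_vcont, Hc; lra. Qed.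

Lemma CRInt_bound (g : R -> C) a b M : a <= b -> CexRInt g a b -> (forall x, a <= x <= b -> Cmod (g x) <= M) ->
  Cmod (CRInt g a b) <= (b - a) * M.
Proof. intros Hab Hex Hb. rewrite <- normCR.
  apply (@norm_RInt_le C_R_NormedModule g (fun _ => M) a b) ; auto.
  - intros x Hx. rewrite normCR. auto.
  - apply (@RInt_correct C_R_CompleteNormedModule). exact Hex.
  - apply (@is_RInt_const R_NormedModule). Qed.

Lemma CRInt_Chasles g a b c : CexRInt g a b -> CexRInt g b c -> Cplus (CRInt g a b) (CRInt g b c) = CRInt g a c.
Proof. intros H1 H2. apply (@RInt_Chasles C_R_CompleteNormedModule); auto. Qed.

Lemma CRInt_minus f g a b : CexRInt f a b -> CexRInt g a b ->
  CRInt (fun x => Cminus (f x) (g x)) a b = Cminus (CRInt f a b) (CRInt g a b).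
Proof. intros H1 H2. apply (@RInt_minus C_R_CompleteNormedModule); auto. Qed.

Lemma CRInt_const (c : C) a b : CRInt (fun _ => c) a b = Cmult (RtoC (b - a)) c.
Proof. unfold CRInt. rewrite (@RInt_const C_R_CompleteNormedModule). apply scalCR. Qed.

Lemma CRInt_ext f g a b : (forall x, Rmin a b <= x <= Rmax a b -> f x = g x) -> CRInt f a b = CRInt g a b.
Proof. intros H. apply (@RInt_ext C_R_CompleteNormedModule). intros x Hx. apply H. lra. Qed.

Definition inR (a b c d : R) (z : C) := a <= fst z <= b /\ c <= snd z <= d.

Definition RI (H : C -> C) (a b c d : R) : C :=
  Cplus (Cminus (CRInt (fun x => H (x,c)) a b) (CRInt (fun x => H (x,d)) a b))
        (Cmult Ci (Cminus (CRInt (fun y => H (b,y)) c d) (CRInt (fun y => H (a,y)) c d))).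

Definition ContR H a b c d := forall z, inR a b c d z -> Ccont H z.

Lemma ContR_sub H a b c d a' b' c' d' : ContR H a b c d -> a <= a' -> b' <= b -> c <= c' -> d' <= d ->
  ContR H a' b' c' d'.
Proof. intros Hc ? ? ? ? z [? ?]. apply Hc. split; lra. Qed.

Lemma exh H a b c d y : ContR H a b c d -> a <= b -> c <= y <= d -> CexRInt (fun x => H (x, y)) a b.
Proof. intros Hc Hab Hy. apply ex_hseg; auto. intros x Hx. apply Hc. split; simpl; lra. Qed.
Lemma exv H a b c d x : ContR H a b c d -> c <= d -> a <= x <= b -> CexRInt (fun y => H (x, y)) c d.
Proof. intros Hc Hab Hy. apply ex_vseg; auto. intros y Hx. apply Hc. split; simpl; lra. Qed.

Lemma RI_splitx H a e b c d : a <= e <= b -> c <= d -> ContR H a b c d ->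
  RI H a b c d = Cplus (RI H a e c d) (RI H e b c d).
Proof. intros He Hcd Hc. unfold RI.
  rewrite <- (CRInt_Chasles (fun x => H (x,c)) a e b).
  2: apply (exh H a e c d); [eapply ContR_sub; eauto; lra|lra|lra].
  2: apply (exh H e b c d); [eapply ContR_sub; eauto; lra|lra|lra].
  rewrite <- (CRInt_Chasles (fun x => H (x,d)) a e b).
  2: apply (exh H a e c d); [eapply ContR_sub; eauto; lra|lra|lra].
  2: apply (exh H e b c d); [eapply ContR_sub; eauto; lra|lra|lra].
  ring. Qed.

Lemma RI_splity H a b c e d : c <= e <= d -> a <= b -> ContR H a b c d ->
  RI H a b c d = Cplus (RI H a b c e) (RI H a b e d).
Proof. intros He Hcd Hc. unfold RI.
  rewrite <- (CRInt_Chasles (fun y => H (b,y)) c e d).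
  2: apply (exv H a b c e); [eapply ContR_sub; eauto; lra|lra|lra].
  2: apply (exv H a b e d); [eapply ContR_sub; eauto; lra|lra|lra].
  rewrite <- (CRInt_Chasles (fun y => H (a,y)) c e d).
  2: apply (exv H a b c e); [eapply ContR_sub; eauto; lra|lra|lra].
  2: apply (exv H a b e d); [eapply ContR_sub; eauto; lra|lra|lra].
  ring. Qed.

Lemma RI_minus H A a b c d : a <= b -> c <= d -> ContR H a b c d -> ContR A a b c d ->
  RI (fun z => Cminus (H z) (A z)) a b c d = Cminus (RI H a b c d) (RI A a b c d).
Proof. intros Hab Hcd Hc Ha. unfold RI.
  rewrite (CRInt_minus (fun x => H (x,c)) (fun x => A (x,c))) by (eapply exh; eauto; lra).
  rewrite (CRInt_minus (fun x => H (x,d)) (fun x => A (x,d))) by (eapply exh; eauto; lra).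
  rewrite (CRInt_minus (fun y => H (b,y)) (fun y => A (b,y))) by (eapply exv; eauto; lra).
  rewrite (CRInt_minus (fun y => H (a,y)) (fun y => A (a,y))) by (eapply exv; eauto; lra).
  ring. Qed.

Lemma Ccont_affine (al l z0 : C) z : Ccont (fun w => Cplus al (Cmult l (Cminus w z0))) z.
Proof. intros eps Heps. exists (eps / (Cmod l + 1)). split.
  apply Rdiv_lt_0_compat; auto. pose proof (Cmod_ge_0 l); lra.
  intros w Hw. replace (Cminus (Cplus al (Cmult l (Cminus w z0))) (Cplus al (Cmult l (Cminus z z0))))
    with (Cmult l (Cminus w z)) by ring. rewrite Cmod_mult.
  pose proof (Cmod_ge_0 l). pose proof (Cmod_ge_0 (Cminus w z)).
  apply Rle_lt_trans with ((Cmod l + 1) * Cmod (Cminus w z)). nra.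
  apply Rlt_le_trans with ((Cmod l + 1) * (eps / (Cmod l + 1))). apply Rmult_lt_compat_l; lra.
  right; field; lra. Qed.

Lemma Ccont_minus H A z : Ccont H z -> Ccont A z -> Ccont (fun w => Cminus (H w) (A w)) z.
Proof. intros H1 H2 eps Heps. destruct (H1 (eps/2) ltac:(lra)) as [d1 [? Hd1]].
  destruct (H2 (eps/2) ltac:(lra)) as [d2 [? Hd2]]. exists (Rmin d1 d2). split. apply Rmin_pos; auto.
  intros w Hw. pose proof (Rmin_l d1 d2). pose proof (Rmin_r d1 d2).
  specialize (Hd1 w ltac:(lra)). specialize (Hd2 w ltac:(lra)).
  replace (Cminus (Cminus (H w) (A w)) (Cminus (H z) (A z))) with
     (Cplus (Cminus (H w) (H z)) (Copp (Cminus (A w) (A z)))) by ring.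
  eapply Rle_lt_trans. apply Cmod_triangle. rewrite Cmod_opp. lra. Qed.

Lemma RI_affine (al l z0 : C) a b c d : a <= b -> c <= d ->
  RI (fun w => Cplus al (Cmult l (Cminus w z0))) a b c d = RtoC 0.
Proof. intros Hab Hcd. set (A := fun w => Cplus al (Cmult l (Cminus w z0))).
  assert (HA : ContR A a b c d) by (intros z _; apply Ccont_affine).
  unfold RI.
  rewrite <- (CRInt_minus (fun x => A (x,c)) (fun x => A (x,d))) by (eapply exh; eauto; lra).
  rewrite <- (CRInt_minus (fun y => A (b,y)) (fun y => A (a,y))) by (eapply exv; eauto; lra).
  rewrite (CRInt_ext _ (fun _ => Cmult l (0, c - d))).
  2: { intros x _. unfold A. destruct l, z0, al. unfold Cminus, Cplus, Cmult, Copp; simpl. f_equal; ring. }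
  rewrite (CRInt_ext (fun y => Cminus (A (b,y)) (A (a,y))) (fun _ => Cmult l (b - a, 0))).
  2: { intros x _. unfold A. destruct l, z0, al. unfold Cminus, Cplus, Cmult, Copp; simpl. f_equal; ring. }
  rewrite !CRInt_const. destruct l. unfold Cminus, Cplus, Cmult, Copp, RtoC, Ci; simpl. f_equal; ring. Qed.

Lemma RI_bound H a b c d M : a <= b -> c <= d -> ContR H a b c d -> (forall z, inR a b c d z -> Cmod (H z) <= M) ->
  Cmod (RI H a b c d) <= 2 * (b - a) * M + 2 * (d - c) * M.
Proof. intros Hab Hcd Hc HM. unfold RI.
  assert (B1 : forall y, c <= y <= d -> Cmod (CRInt (fun x => H (x,y)) a b) <= (b - a) * M).
  { intros y Hy. apply CRInt_bound; auto. eapply exh; eauto. intros x Hx. apply HM. split; simpl; lra. }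
  assert (B2 : forall x, a <= x <= b -> Cmod (CRInt (fun y => H (x,y)) c d) <= (d - c) * M).
  { intros x Hx. apply CRInt_bound; auto. eapply exv; eauto. intros y Hy. apply HM. split; simpl; lra. }
  eapply Rle_trans. apply Cmod_triangle. rewrite Cmod_mult.
  assert (Cmod Ci = 1). { unfold Cmod, Ci; simpl. replace (0*(0*1) + 1*(1*1)) with 1 by ring. apply sqrt_1. }
  rewrite H0, Rmult_1_l.
  unfold Cminus. pose proof (Cmod_triangle (CRInt (fun x => H (x,c)) a b) (Copp (CRInt (fun x => H (x,d)) a b))).
  pose proof (Cmod_triangle (CRInt (fun y => H (b,y)) c d) (Copp (CRInt (fun y => H (a,y)) c d))).
  rewrite Cmod_opp in H1, H2.
  pose proof (B1 c ltac:(lra)). pose proof (B1 d ltac:(lra)). pose proof (B2 b ltac:(lra)). pose proof (B2 a ltac:(lra)).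
  lra. Qed.

Record rect := mkR { ra : R; rb : R; rc : R; rd : R }.
Definition RIr H r := RI H (ra r) (rb r) (rc r) (rd r).
Definition ch1 r := mkR (ra r) ((ra r + rb r)/2) (rc r) ((rc r + rd r)/2).
Definition ch2 r := mkR ((ra r + rb r)/2) (rb r) (rc r) ((rc r + rd r)/2).
Definition ch3 r := mkR (ra r) ((ra r + rb r)/2) ((rc r + rd r)/2) (rd r).
Definition ch4 r := mkR ((ra r + rb r)/2) (rb r) ((rc r + rd r)/2) (rd r).

Lemma RI_quad H r : ra r <= rb r -> rc r <= rd r -> ContR H (ra r) (rb r) (rc r) (rd r) ->
  RIr H r = Cplus (Cplus (RIr H (ch1 r)) (RIr H (ch2 r))) (Cplus (RIr H (ch3 r)) (RIr H (ch4 r))).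
Proof. destruct r as [a b c d]. unfold RIr, ch1, ch2, ch3, ch4; simpl. intros Hab Hcd Hc.
  rewrite (RI_splitx H a ((a+b)/2) b c d) by (auto; lra).
  rewrite (RI_splity H a ((a+b)/2) c ((c+d)/2) d) by (try lra; eapply ContR_sub; eauto; lra).
  rewrite (RI_splity H ((a+b)/2) b c ((c+d)/2) d) by (try lra; eapply ContR_sub; eauto; lra).
  ring. Qed.

Definition step H r :=
  if Rle_dec (Cmod (RIr H r) / 4) (Cmod (RIr H (ch1 r))) then ch1 r else
  if Rle_dec (Cmod (RIr H r) / 4) (Cmod (RIr H (ch2 r))) then ch2 r else
  if Rle_dec (Cmod (RIr H r) / 4) (Cmod (RIr H (ch3 r))) then ch3 r else ch4 r.

Lemma step_big H r : ra r <= rb r -> rc r <= rd r -> ContR H (ra r) (rb r) (rc r) (rd r) ->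
  Cmod (RIr H r) / 4 <= Cmod (RIr H (step H r)).
Proof. intros Hab Hcd Hc. unfold step.
  destruct (Rle_dec _ (Cmod (RIr H (ch1 r)))); auto.
  destruct (Rle_dec _ (Cmod (RIr H (ch2 r)))); auto.
  destruct (Rle_dec _ (Cmod (RIr H (ch3 r)))); auto.
  rewrite (RI_quad H r Hab Hcd Hc) at 1.
  pose proof (Cmod_triangle (Cplus (RIr H (ch1 r)) (RIr H (ch2 r))) (Cplus (RIr H (ch3 r)) (RIr H (ch4 r)))).
  pose proof (Cmod_triangle (RIr H (ch1 r)) (RIr H (ch2 r))).
  pose proof (Cmod_triangle (RIr H (ch3 r)) (RIr H (ch4 r))).
  rewrite (RI_quad H r Hab Hcd Hc) in n, n0, n1. lra. Qed.

Lemma step_geom H r : ra r <= rb r -> rc r <= rd r ->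
  ra r <= ra (step H r) /\ rb (step H r) <= rb r /\ rc r <= rc (step H r) /\ rd (step H r) <= rd r /\
  rb (step H r) - ra (step H r) = (rb r - ra r) / 2 /\ rd (step H r) - rc (step H r) = (rd r - rc r) / 2.
Proof. intros. unfold step.
  repeat destruct Rle_dec; unfold ch1, ch2, ch3, ch4; simpl; repeat split; lra. Qed.

Fixpoint rs H r0 n := match n with O => r0 | S n => step H (rs H r0 n) end.

Lemma rs_geom H r0 n : ra r0 <= rb r0 -> rc r0 <= rd r0 ->
  ra r0 <= ra (rs H r0 n) /\ rb (rs H r0 n) <= rb r0 /\ rc r0 <= rc (rs H r0 n) /\ rd (rs H r0 n) <= rd r0 /\
  rb (rs H r0 n) - ra (rs H r0 n) = (rb r0 - ra r0) / 2^n /\ rd (rs H r0 n) - rc (rs H r0 n) = (rd r0 - rc r0) / 2^n.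
Proof. intros Hab Hcd. induction n as [|n IH].
  - simpl. repeat split; try lra; field.
  - simpl. destruct IH as [I1 [I2 [I3 [I4 [I5 I6]]]]].
    assert (ra (rs H r0 n) <= rb (rs H r0 n)).
    { assert (0 <= (rb r0 - ra r0) / 2 ^ n). apply Rdiv_le_0_compat. lra. apply pow_lt; lra. lra. }
    assert (rc (rs H r0 n) <= rd (rs H r0 n)).
    { assert (0 <= (rd r0 - rc r0) / 2 ^ n). apply Rdiv_le_0_compat. lra. apply pow_lt; lra. lra. }
    destruct (step_geom H (rs H r0 n)) as [J1 [J2 [J3 [J4 [J5 J6]]]]]; auto.
    repeat split; try lra. rewrite J5, I5. field. apply pow_nonzero; lra.
    rewrite J6, I6. field. apply pow_nonzero; lra. Qed.

Lemma pow2_big K : exists n, K < 2 ^ n.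
Proof. assert (Hn : forall n, INR n < 2 ^ n).
  { induction n. simpl; lra. rewrite S_INR. simpl. pose proof (pow_R1_Rle 2 n ltac:(lra)); lra. }
  destruct (archimed K) as [H1 _]. destruct (Rle_dec K 0).
  - exists O. simpl; lra.
  - exists (Z.to_nat (up K)). eapply Rlt_trans; [|apply Hn]. rewrite INR_IZR_INZ.
    rewrite Z2Nat.id. lra. apply le_IZR. lra. Qed.

Lemma width_nonneg H r0 n : ra r0 <= rb r0 -> rc r0 <= rd r0 ->
  ra (rs H r0 n) <= rb (rs H r0 n) /\ rc (rs H r0 n) <= rd (rs H r0 n).
Proof. intros. destruct (rs_geom H r0 n) as [_ [_ [_ [_ [I5 I6]]]]]; auto.
  assert (0 <= (rb r0 - ra r0) / 2 ^ n). apply Rdiv_le_0_compat. lra. apply pow_lt; lra.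
  assert (0 <= (rd r0 - rc r0) / 2 ^ n). apply Rdiv_le_0_compat. lra. apply pow_lt; lra. lra. Qed.

Lemma rs_mono H r0 n k : ra r0 <= rb r0 -> rc r0 <= rd r0 ->
  ra (rs H r0 n) <= ra (rs H r0 (k + n)) /\ rb (rs H r0 (k+n)) <= rb (rs H r0 n) /\
  rc (rs H r0 n) <= rc (rs H r0 (k + n)) /\ rd (rs H r0 (k+n)) <= rd (rs H r0 n).
Proof. intros. induction k. simpl. lra.
  simpl. destruct (width_nonneg H r0 (k+n)) as [W1 W2]; auto.
  destruct (step_geom H (rs H r0 (k+n))) as [J1 [J2 [J3 [J4 _]]]]; auto. lra. Qed.

Lemma rs_ab H r0 m n : ra r0 <= rb r0 -> rc r0 <= rd r0 ->
  ra (rs H r0 m) <= rb (rs H r0 n) /\ rc (rs H r0 m) <= rd (rs H r0 n).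
Proof. intros. destruct (Nat.le_ge_cases m n) as [Hmn|Hmn].
  - replace n with ((n - m) + m)%nat by lia. destruct (rs_mono H r0 m (n - m)) as [? [? [? ?]]]; auto.
    destruct (width_nonneg H r0 ((n-m)+m)); auto. lra.
  - replace m with ((m - n) + n)%nat by lia. destruct (rs_mono H r0 n (m - n)) as [? [? [? ?]]]; auto.
    destruct (width_nonneg H r0 ((m-n)+n)); auto. lra. Qed.

Lemma goursat H a b c d : a <= b -> c <= d -> (forall z, inR a b c d z -> exists l, Cdiff H z l) ->
  RI H a b c d = RtoC 0.
Proof. intros Hab Hcd Hd.
  assert (Hc : ContR H a b c d). { intros z Hz. destruct (Hd z Hz) as [l Hl]. eapply Cdiff_cont; eauto. }
  set (r0 := mkR a b c d).
  assert (G : forall n, ra r0 <= ra (rs H r0 n) /\ rb (rs H r0 n) <= rb r0 /\ rc r0 <= rc (rs H r0 n) /\ rd (rs H r0 n) <= rd r0 /\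
    rb (rs H r0 n) - ra (rs H r0 n) = (rb r0 - ra r0) / 2^n /\ rd (rs H r0 n) - rc (rs H r0 n) = (rd r0 - rc r0) / 2^n)
    by (intros; apply rs_geom; simpl; auto).
  assert (W : forall n, ra (rs H r0 n) <= rb (rs H r0 n) /\ rc (rs H r0 n) <= rd (rs H r0 n))
    by (intros; apply width_nonneg; simpl; auto).
  assert (CR : forall n, ContR H (ra (rs H r0 n)) (rb (rs H r0 n)) (rc (rs H r0 n)) (rd (rs H r0 n))).
  { intros n. destruct (G n) as [? [? [? [? _]]]]. eapply ContR_sub; eauto. }
  assert (Big : forall n, Cmod (RIr H r0) / 4 ^ n <= Cmod (RIr H (rs H r0 n))).
  { induction n. simpl. lra. simpl.
    destruct (W n). pose proof (step_big H (rs H r0 n) H0 H1 (CR n)).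
    replace (Cmod (RIr H r0) / (4 * 4 ^ n)) with ((Cmod (RIr H r0) / 4 ^ n) / 4) by (field; apply pow_nonzero; lra).
    lra. }
  destruct (completeness (fun x => exists n, x = ra (rs H r0 n))) as [xs [Hub Hlub]].
  { exists b. intros x [n ->]. destruct (G n) as [? [? _]]. destruct (W n). simpl in *. lra. }
  { exists a. exists O. reflexivity. }
  destruct (completeness (fun y => exists n, y = rc (rs H r0 n))) as [ys [Hub' Hlub']].
  { exists d. intros y [n ->]. destruct (G n) as [? [? [? [? _]]]]. destruct (W n). simpl in *. lra. }
  { exists c. exists O. reflexivity. }
  assert (Xs : forall n, ra (rs H r0 n) <= xs <= rb (rs H r0 n)).
  { intros n. split. apply Hub. exists n; reflexivity.
    apply Hlub. intros x [m ->]. apply rs_ab; simpl; auto. }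
  assert (Ys : forall n, rc (rs H r0 n) <= ys <= rd (rs H r0 n)).
  { intros n. split. apply Hub'. exists n; reflexivity.
    apply Hlub'. intros y [m ->]. apply rs_ab; simpl; auto. }
  assert (Hzs : inR a b c d (xs, ys)).
  { destruct (Xs O), (Ys O). simpl in *. split; simpl; lra. }
  destruct (Hd _ Hzs) as [l Hl].
  set (w := b - a). set (h := d - c).
  assert (Key : forall eps, 0 < eps -> Cmod (RIr H r0) <= 2 * eps * (w + h)^2).
  { intros eps Heps. destruct (Hl eps Heps) as [del [Hdel Hdd]].
    destruct (pow2_big ((w + h) / del)) as [n Hn].
    assert (H2n : 0 < 2 ^ n) by (apply pow_lt; lra).
    assert (Hwh : (w + h) / 2^n < del).
    { apply Rmult_lt_reg_r with (2^n / del). apply Rdiv_lt_0_compat; lra.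
      replace ((w + h) / 2 ^ n * (2 ^ n / del)) with ((w+h)/del) by (field; lra).
      replace (del * (2 ^ n / del)) with (2^n) by (field; lra). lra. }
    set (rn := rs H r0 n).
    destruct (G n) as [_ [_ [_ [_ [G5 G6]]]]]. fold rn in G5, G6. simpl in G5, G6.
    destruct (W n) as [W1 W2]. fold rn in W1, W2.
    set (A := fun z => Cplus (H (xs,ys)) (Cmult l (Cminus z (xs,ys)))).
    assert (HRI : RIr H rn = RI (fun z => Cminus (H z) (A z)) (ra rn) (rb rn) (rc rn) (rd rn)).
    { rewrite RI_minus; auto. unfold A. rewrite RI_affine; auto. unfold RIr. ring.
      apply CR. intros z _. apply Ccont_affine. }
    assert (Bd : Cmod (RIr H rn) <= 2 * (rb rn - ra rn) * (eps * ((w+h)/2^n)) + 2 * (rd rn - rc rn) * (eps * ((w+h)/2^n))).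
    { rewrite HRI. apply RI_bound; auto.
      - intros z Hz. apply Ccont_minus. apply (CR n z Hz). apply Ccont_affine.
      - intros z [Hz1 Hz2]. destruct (Xs n) as [X1 X2], (Ys n) as [Y1 Y2]. fold rn in X1, X2, Y1, Y2.
        assert (Hdist : Cmod (Cminus z (xs, ys)) <= (w+h)/2^n).
        { eapply Rle_trans. apply Cmod_le_sum. destruct z as [zx zy]. simpl in *.
          replace ((w+h)/2^n) with ((b - a)/2^n + (d - c)/2^n) by (unfold w, h; field; lra).
          rewrite <- G5, <- G6. apply Rplus_le_compat; apply Rabs_le; lra. }
        specialize (Hdd z ltac:(lra)). unfold A.
        replace (Cminus (H z) (Cplus (H (xs, ys)) (Cmult l (Cminus z (xs, ys))))) with
          (Cminus (Cminus (H z) (H (xs, ys))) (Cmult l (Cminus z (xs, ys)))) by ring.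
        eapply Rle_trans. apply Hdd. apply Rmult_le_compat_l; lra. }
    rewrite G5, G6 in Bd. specialize (Big n). fold rn in Big.
    assert (E4 : 4 ^ n = 2^n * 2^n) by (rewrite <- Rpow_mult_distr; f_equal; lra).
    assert (Cmod (RIr H r0) <= 4^n * Cmod (RIr H rn)).
    { apply Rmult_le_reg_r with (/ 4^n). apply Rinv_0_lt_compat, pow_lt; lra.
      replace (4 ^ n * Cmod (RIr H rn) * / 4 ^ n) with (Cmod (RIr H rn)) by (field; apply pow_nonzero; lra).
      exact Big. }
    eapply Rle_trans. apply H0. rewrite E4.
    apply Rle_trans with (2 ^ n * 2 ^ n * (2 * ((b - a) / 2 ^ n) * (eps * ((w + h) / 2 ^ n)) +
       2 * ((d - c) / 2 ^ n) * (eps * ((w + h) / 2 ^ n)))).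
    apply Rmult_le_compat_l. nra. exact Bd.
    right. unfold w, h. field. lra. }
  assert (Cmod (RIr H r0) = 0).
  { apply Rle_antisym; [|apply Cmod_ge_0].
    destruct (Req_dec (w + h) 0) as [E|E].
    - specialize (Key 1 Rlt_0_1). rewrite E in Key. simpl in Key. lra.
    - apply Rnot_lt_le. intro Hlt. 
      assert (0 < (w+h)^2) by (apply pow_lt; unfold w, h in *; lra).
      specialize (Key (Cmod (RIr H r0) / (4 * (w+h)^2)) ltac:(apply Rdiv_lt_0_compat; lra)).
      replace (2 * (Cmod (RIr H r0) / (4 * (w + h) ^ 2)) * (w + h) ^ 2) with (Cmod (RIr H r0) / 2) in Key by (field; lra).
      lra. }
  apply Cmod_eq_0. exact H0. Qed.

Definition HC H a b y := forall x, a <= x <= b -> Ccont H (x, y).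
Definition VC H c d x := forall y, c <= y <= d -> Ccont H (x, y).

Lemma RI_splitx' H a e b c d : a <= e <= b -> HC H a b c -> HC H a b d ->
  RI H a b c d = Cplus (RI H a e c d) (RI H e b c d).
Proof. intros He Hc Hd. unfold RI.
  rewrite <- (CRInt_Chasles (fun x => H (x,c)) a e b).
  2,3: apply ex_hseg; [lra| intros; apply Hc; lra].
  rewrite <- (CRInt_Chasles (fun x => H (x,d)) a e b).
  2,3: apply ex_hseg; [lra| intros; apply Hd; lra].
  ring. Qed.

Lemma RI_splity' H a b c e d : c <= e <= d -> VC H c d a -> VC H c d b ->
  RI H a b c d = Cplus (RI H a b c e) (RI H a b e d).
Proof. intros He Ha Hb. unfold RI.
  rewrite <- (CRInt_Chasles (fun y => H (b,y)) c e d).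
  2,3: apply ex_vseg; [lra| intros; apply Hb; lra].
  rewrite <- (CRInt_Chasles (fun y => H (a,y)) c e d).
  2,3: apply ex_vseg; [lra| intros; apply Ha; lra].
  ring. Qed.

Lemma RI_bound' H a b c d M : a <= b -> c <= d -> HC H a b c -> HC H a b d -> VC H c d a -> VC H c d b ->
  (forall x, a <= x <= b -> Cmod (H (x,c)) <= M /\ Cmod (H (x,d)) <= M) ->
  (forall y, c <= y <= d -> Cmod (H (a,y)) <= M /\ Cmod (H (b,y)) <= M) ->
  Cmod (RI H a b c d) <= 2 * (b - a) * M + 2 * (d - c) * M.
Proof. intros Hab Hcd H1 H2 H3 H4 M1 M2. unfold RI.
  assert (B1 : Cmod (CRInt (fun x => H (x,c)) a b) <= (b - a) * M).
  { apply CRInt_bound; auto. apply ex_hseg; auto. intros; apply M1; auto. }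
  assert (B2 : Cmod (CRInt (fun x => H (x,d)) a b) <= (b - a) * M).
  { apply CRInt_bound; auto. apply ex_hseg; auto. intros; apply M1; auto. }
  assert (B3 : Cmod (CRInt (fun y => H (a,y)) c d) <= (d - c) * M).
  { apply CRInt_bound; auto. apply ex_vseg; auto. intros; apply M2; auto. }
  assert (B4 : Cmod (CRInt (fun y => H (b,y)) c d) <= (d - c) * M).
  { apply CRInt_bound; auto. apply ex_vseg; auto. intros; apply M2; auto. }
  eapply Rle_trans. apply Cmod_triangle. rewrite Cmod_mult.
  assert (Cmod Ci = 1). { unfold Cmod, Ci; simpl. replace (0*(0*1) + 1*(1*1)) with 1 by ring. apply sqrt_1. }
  rewrite H0, Rmult_1_l.
  unfold Cminus. pose proof (Cmod_triangle (CRInt (fun x => H (x,c)) a b) (Copp (CRInt (fun x => H (x,d)) a b))).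
  pose proof (Cmod_triangle (CRInt (fun y => H (b,y)) c d) (Copp (CRInt (fun y => H (a,y)) c d))).
  rewrite Cmod_opp in H5, H6. lra. Qed.

Lemma goursat_pt H a b c d x0 y0 M d0 : a < x0 < b -> c < y0 < d -> 0 < d0 ->
  (forall z, inR a b c d z -> z <> (x0, y0) -> exists l, Cdiff H z l) ->
  (forall z, inR a b c d z -> z <> (x0,y0) -> Cmod (Cminus z (x0,y0)) < d0 -> Cmod (H z) <= M) ->
  RI H a b c d = RtoC 0.
Proof. intros Hx Hy Hd0 Hd HM.
  assert (Cc : forall z, inR a b c d z -> z <> (x0,y0) -> Ccont H z).
  { intros z Hz Hn. destruct (Hd z Hz Hn) as [l Hl]. eapply Cdiff_cont; eauto. }
  assert (Key : forall del, 0 < del -> del < d0 / 4 -> del < x0 - a -> del < b - x0 -> del < y0 - c -> del < d - y0 ->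
     Cmod (RI H a b c d) <= 8 * del * M).
  { intros del Hdel D1 D2 D3 D4 D5.
    assert (HCl : forall y, c <= y <= d -> y <> y0 -> HC H a b y).
    { intros y Hyy Hne x Hx'. apply Cc. split; simpl; lra. intro E; injection E; lra. }
    assert (VCl : forall x, a <= x <= b -> x <> x0 -> VC H c d x).
    { intros x Hxx Hne y Hy'. apply Cc. split; simpl; lra. intro E; injection E; lra. }
    set (e1 := x0 - del). set (e2 := x0 + del). set (f1 := y0 - del). set (f2 := y0 + del).
    rewrite (RI_splitx' H a e1 b c d); try (unfold e1; lra); try (apply HCl; lra).
    rewrite (RI_splitx' H e1 e2 b c d); try (unfold e1, e2; lra);
      try (intros x Hx'; apply Cc; [split; simpl; unfold e1 in *; lra| intro E; injection E; lra]).
    rewrite (goursat H a e1 c d); try (unfold e1; lra).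
    2: { intros z [Hz1 Hz2]. apply Hd. split; unfold e1 in *; lra. intro E; rewrite E in Hz1; simpl in Hz1; unfold e1 in *; lra. }
    rewrite (goursat H e2 b c d); try (unfold e2; lra).
    2: { intros z [Hz1 Hz2]. apply Hd. split; unfold e2 in *; lra. intro E; rewrite E in Hz1; simpl in Hz1; unfold e2 in *; lra. }
    rewrite (RI_splity' H e1 e2 c f1 d); try (unfold f1; lra); try (apply VCl; unfold e1, e2; lra).
    rewrite (RI_splity' H e1 e2 f1 f2 d); try (unfold f1, f2; lra);
      try (intros y Hy'; apply Cc; [split; simpl; unfold e1, e2, f1 in *; lra| intro E; injection E; unfold e1, e2, f1 in *; lra]).
    rewrite (goursat H e1 e2 c f1); try (unfold e1, e2, f1; lra).
    2: { intros z [Hz1 Hz2]. apply Hd. split; unfold e1, e2, f1 in *; lra. intro E; rewrite E in Hz2; simpl in Hz2; unfold f1 in *; lra. }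
    rewrite (goursat H e1 e2 f2 d); try (unfold e1, e2, f2; lra).
    2: { intros z [Hz1 Hz2]. apply Hd. split; unfold e1, e2, f2 in *; lra. intro E; rewrite E in Hz2; simpl in Hz2; unfold f2 in *; lra. }
    replace (Cplus (RtoC 0) (Cplus (Cplus (RtoC 0) (Cplus (RI H e1 e2 f1 f2) (RtoC 0))) (RtoC 0))) with (RI H e1 e2 f1 f2) by ring.
    assert (Hsq : forall z, e1 <= fst z <= e2 -> f1 <= snd z <= f2 -> (fst z = e1 \/ fst z = e2 \/ snd z = f1 \/ snd z = f2) ->
       inR a b c d z /\ z <> (x0,y0) /\ Cmod (Cminus z (x0,y0)) < d0).
    { intros [zx zy] H1 H2 H3; simpl in *. split. split; simpl; unfold e1, e2, f1, f2 in *; lra.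
      split. intro E; injection E; intros; unfold e1, e2, f1, f2 in *; lra.
      eapply Rle_lt_trans. apply Cmod_le_sum. simpl.
      assert (Rabs (zx + - x0) <= del) by (apply Rabs_le; unfold e1, e2 in *; lra).
      assert (Rabs (zy + - y0) <= del) by (apply Rabs_le; unfold f1, f2 in *; lra). lra. }
    eapply Rle_trans. apply (RI_bound' H e1 e2 f1 f2 M); try (unfold e1, e2, f1, f2; lra).
    - intros x Hx'. destruct (Hsq (x,f1)) as [? [? _]]; simpl; unfold e1, e2, f1, f2 in *; try lra. apply Cc; auto.
    - intros x Hx'. destruct (Hsq (x,f2)) as [? [? _]]; simpl; unfold e1, e2, f1, f2 in *; try lra. apply Cc; auto.
    - intros y Hy'. destruct (Hsq (e1,y)) as [? [? _]]; simpl; unfold e1, e2, f1, f2 in *; try lra. apply Cc; auto.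
    - intros y Hy'. destruct (Hsq (e2,y)) as [? [? _]]; simpl; unfold e1, e2, f1, f2 in *; try lra. apply Cc; auto.
    - intros x Hx'. split.
      destruct (Hsq (x,f1)) as [? [? ?]]; simpl; unfold e1, e2, f1, f2 in *; try lra. apply HM; auto.
      destruct (Hsq (x,f2)) as [? [? ?]]; simpl; unfold e1, e2, f1, f2 in *; try lra. apply HM; auto.
    - intros y Hy'. split.
      destruct (Hsq (e1,y)) as [? [? ?]]; simpl; unfold e1, e2, f1, f2 in *; try lra. apply HM; auto.
      destruct (Hsq (e2,y)) as [? [? ?]]; simpl; unfold e1, e2, f1, f2 in *; try lra. apply HM; auto.
    - unfold e1, e2, f1, f2. right; ring. }
  apply Cmod_eq_0. apply Rle_antisym; [|apply Cmod_ge_0].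
  apply Rnot_lt_le. intro Hlt.
  set (m := Rmin (Rmin (d0/4) (Rmin (x0 - a) (b - x0))) (Rmin (y0 - c) (d - y0))).
  assert (Hm : 0 < m). { unfold m. repeat apply Rmin_pos; lra. }
  assert (Hm1 : m <= d0/4 /\ m <= x0 - a /\ m <= b - x0 /\ m <= y0 - c /\ m <= d - y0).
  { unfold m. pose proof (Rmin_l (Rmin (d0/4) (Rmin (x0 - a) (b - x0))) (Rmin (y0 - c) (d - y0))).
    pose proof (Rmin_r (Rmin (d0/4) (Rmin (x0 - a) (b - x0))) (Rmin (y0 - c) (d - y0))).
    pose proof (Rmin_l (d0/4) (Rmin (x0 - a) (b - x0))). pose proof (Rmin_r (d0/4) (Rmin (x0 - a) (b - x0))).
    pose proof (Rmin_l (x0 - a) (b - x0)). pose proof (Rmin_r (x0 - a) (b - x0)).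
    pose proof (Rmin_l (y0 - c) (d - y0)). pose proof (Rmin_r (y0 - c) (d - y0)). lra. }
  assert (HM0 : 0 <= M).
  { pose proof (HM (x0 + m/2, y0)). assert (Cmod (H (x0 + m / 2, y0)) <= M).
    { apply H0. split; simpl; lra. intro E; injection E; lra.
      eapply Rle_lt_trans. apply Cmod_le_sum. simpl. replace (x0 + m/2 + - x0) with (m/2) by ring.
      replace (y0 + - y0) with 0 by ring. rewrite Rabs_R0, Rabs_right; lra. }
    pose proof (Cmod_ge_0 (H (x0 + m / 2, y0))). lra. }
  set (del := Rmin (m/2) (Cmod (RI H a b c d) / (16 * (M + 1)))).
  assert (Hdel : 0 < del). { apply Rmin_pos. lra. apply Rdiv_lt_0_compat; lra. }
  assert (Hdel1 : del <= m/2) by apply Rmin_l.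
  assert (Hdel2 : del <= Cmod (RI H a b c d) / (16 * (M + 1))) by apply Rmin_r.
  specialize (Key del Hdel ltac:(lra) ltac:(lra) ltac:(lra) ltac:(lra) ltac:(lra)).
  assert (8 * del * M <= Cmod (RI H a b c d) / 2).
  { apply Rle_trans with (8 * del * (M + 1)). nra.
    apply Rle_trans with (8 * (Cmod (RI H a b c d) / (16 * (M + 1))) * (M+1)). nra.
    right. field. lra. }
  lra. Qed.

Definition CD H z := exists l, CDer H z l.

Lemma CD_Cdiff H z : CD H z -> exists l, Cdiff H z l.
Proof. intros [l Hl]. exists l. apply CDer_Cdiff; auto. Qed.

Lemma CD_const (a : C) z : CD (fun _ => a) z.
Proof. exists (RtoC 0). apply Cdiff_CDer. intros eps Heps. exists 1. split. lra. intros w _.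
  replace (Cminus (Cminus a a) (Cmult (RtoC 0) (Cminus w z))) with (RtoC 0) by ring. rewrite Cmod_0.
  pose proof (Cmod_ge_0 (Cminus w z)). nra. Qed.

Lemma CD_id z : CD (fun w => w) z.
Proof. exists (RtoC 1). apply Cdiff_CDer. intros eps Heps. exists 1. split. lra. intros w _.
  replace (Cminus (Cminus w z) (Cmult (RtoC 1) (Cminus w z))) with (RtoC 0) by ring. rewrite Cmod_0.
  pose proof (Cmod_ge_0 (Cminus w z)). nra. Qed.

Lemma CD_plus f g z : CD f z -> CD g z -> CD (fun w => Cplus (f w) (g w)) z.
Proof. intros [a Ha] [b Hb]. exists (plus a b). apply (@is_derive_plus C_AbsRing (AbsRing_NormedModule C_AbsRing) f g z a b Ha Hb). Qed.

Lemma CD_minus f g z : CD f z -> CD g z -> CD (fun w => Cminus (f w) (g w)) z.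
Proof. intros [a Ha] [b Hb]. exists (minus a b). apply (@is_derive_minus C_AbsRing (AbsRing_NormedModule C_AbsRing) f g z a b Ha Hb). Qed.

Lemma CD_mult f g z : CD f z -> CD g z -> CD (fun w => Cmult (f w) (g w)) z.
Proof. intros [a Ha] [b Hb]. eexists. apply (@is_derive_mult C_AbsRing f g z a b Ha Hb).
  intros; apply Cmult_comm. Qed.

Lemma CD_comp f g z : CD g z -> CD f (g z) -> CD (fun w => f (g w)) z.
Proof. intros [a Ha] [b Hb]. eexists. apply (@is_derive_comp C_AbsRing (AbsRing_NormedModule C_AbsRing) f g z b a Hb Ha). Qed.

Lemma CD_exp z : CD Cexp z.
Proof. exists (Cexp z). apply Cdiff_CDer, Cdiff_exp. Qed.

Lemma CD_inv z : z <> RtoC 0 -> CD Cinv z.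
Proof. intros Hz. eexists. apply Cdiff_CDer, Cdiff_inv, Hz. Qed.

Lemma CD_ext f g z : (forall w, f w = g w) -> CD f z -> CD g z.
Proof. intros E [a Ha]. exists a. eapply (@is_derive_ext C_AbsRing (AbsRing_NormedModule C_AbsRing)); eauto. Qed.

(* the periodic Cauchy kernel centred at z0 *)
Definition tpi : C := (0, 2 * PI).
Definition Lk (z0 z : C) : C := Cmult tpi (Cinv (Cminus (Cexp (Cmult tpi (Cminus z z0))) (RtoC 1))).

Lemma CD_Lk z0 z : Cexp (Cmult tpi (Cminus z z0)) <> RtoC 1 -> CD (Lk z0) z.
Proof. intros Hne. unfold Lk. apply CD_mult. apply CD_const.
  apply (CD_comp Cinv (fun w => Cminus (Cexp (Cmult tpi (Cminus w z0))) (RtoC 1))).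
  - apply CD_minus; [|apply CD_const].
    apply (CD_comp Cexp (fun w => Cmult tpi (Cminus w z0))).
    + apply CD_mult. apply CD_const. apply CD_minus. apply CD_id. apply CD_const.
    + apply CD_exp.
  - apply CD_inv. intro E. apply Hne. 
    replace (Cexp (Cmult tpi (Cminus z z0))) with (Cplus (Cminus (Cexp (Cmult tpi (Cminus z z0))) (RtoC 1)) (RtoC 1)) by ring.
    rewrite E. ring. Qed.

Lemma Cexp_tpi w : Cexp (Cplus w tpi) = Cexp w.
Proof. rewrite Cexp_add. unfold tpi, Cexp; simpl. rewrite exp_0, Rmult_1_l, cos_2PI, sin_2PI.
  destruct w; unfold Cmult; simpl. f_equal; ring. Qed.

Lemma Lk_per z0 x y : Lk z0 (x + 1, y) = Lk z0 (x, y).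
Proof. unfold Lk. f_equal. f_equal. f_equal.
  replace (Cmult tpi (Cminus (x + 1, y) z0)) with (Cplus (Cmult tpi (Cminus (x, y) z0)) tpi).
  apply Cexp_tpi. destruct z0; unfold tpi, Cmult, Cplus, Cminus, Copp; simpl. f_equal; ring. Qed.

Lemma Cmod_Cexp_u z0 z : Cmod (Cexp (Cmult tpi (Cminus z z0))) = exp (- (2 * PI) * (snd z - snd z0)).
Proof. rewrite Cmod_Cexp. f_equal. destruct z, z0; unfold tpi, Cmult, Cminus, Cplus, Copp; simpl. ring. Qed.

Lemma PI_pos3 : 3 < PI.
Proof. pose proof PI2_3_2. lra. Qed.

Lemma Cmod_tpi : Cmod tpi = 2 * PI.
Proof. unfold tpi, Cmod; simpl. pose proof PI_pos3.
  replace (0 * (0 * 1) + 2 * PI * (2 * PI * 1)) with ((2*PI)^2) by ring. apply sqrt_pow2. lra. Qed.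

Definition Eu (z0 z : C) := Cexp (Cmult tpi (Cminus z z0)).

Lemma Lk_mod z0 z : Eu z0 z <> RtoC 1 -> Cmod (Lk z0 z) = 2 * PI / Cmod (Cminus (Eu z0 z) (RtoC 1)).
Proof. intros H. unfold Lk. rewrite Cmod_mult, Cmod_tpi, Cmod_Cinv. fold (Eu z0 z). reflexivity.
  intro E. apply H. replace (Eu z0 z) with (Cplus (Cminus (Eu z0 z) (RtoC 1)) (RtoC 1)) by ring.
  unfold Eu. rewrite E. ring. Qed.

Lemma Lk_plus_mod z0 z : Eu z0 z <> RtoC 1 ->
  Cmod (Cplus (Lk z0 z) tpi) = 2 * PI * Cmod (Eu z0 z) / Cmod (Cminus (Eu z0 z) (RtoC 1)).
Proof. intros H. assert (Hn : Cminus (Eu z0 z) (RtoC 1) <> RtoC 0).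
  { intro E. apply H. replace (Eu z0 z) with (Cplus (Cminus (Eu z0 z) (RtoC 1)) (RtoC 1)) by ring. rewrite E. ring. }
  replace (Cplus (Lk z0 z) tpi) with (Cmult (Cmult tpi (Eu z0 z)) (Cinv (Cminus (Eu z0 z) (RtoC 1)))).
  rewrite !Cmod_mult, Cmod_tpi, Cmod_Cinv by auto. unfold Rdiv. ring.
  unfold Lk. fold (Eu z0 z). field. auto. Qed.

Lemma Eu_mod z0 z : Cmod (Eu z0 z) = exp (- (2 * PI) * (snd z - snd z0)).
Proof. apply Cmod_Cexp_u. Qed.

Lemma cos_lt_1 t : 0 < Rabs t <= PI -> cos t < 1.
Proof. intros [H1 H2]. destruct (Rle_dec 0 t).
  - rewrite Rabs_right in * by lra. rewrite <- cos_0. apply cos_decreasing_1; lra.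
  - rewrite Rabs_left in * by lra. rewrite <- cos_neg, <- cos_0. apply cos_decreasing_1; lra. Qed.

Lemma Eu_ne1 x0 y0 z : x0 = 0 -> Rabs (fst z) <= /2 -> z <> (x0, y0) -> Eu (x0,y0) z <> RtoC 1.
Proof. intros -> Hx Hne E. destruct z as [x y]. simpl in Hx.
  unfold Eu, Cexp, tpi, Cmult, Cminus, Cplus, Copp in E; simpl in E.
  injection E; intros E2 E1.
  replace (0 * (x + - 0) - 2 * PI * (y + - y0)) with (- (2 * PI) * (y - y0)) in E1, E2 by ring.
  replace (0 * (y + - y0) + 2 * PI * (x + - 0)) with (2 * PI * x) in E1, E2 by ring.
  pose proof PI_pos3.
  destruct (Req_dec y y0) as [Ey|Ey].
  - subst y. replace (- (2 * PI) * (y0 - y0)) with 0 in E1 by ring. rewrite exp_0, Rmult_1_l in E1.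
    assert (x <> 0) by (intro; subst; apply Hne; reflexivity).
    assert (cos (2 * PI * x) < 1). apply cos_lt_1. rewrite Rabs_mult, (Rabs_right (2*PI)) by lra.
    split. apply Rmult_lt_0_compat. lra. apply Rabs_pos_lt; auto.
    nra. lra.
  - assert (Hc2 : (exp (- (2 * PI) * (y - y0)) * cos (2 * PI * x))^2 + (exp (- (2 * PI) * (y - y0)) * sin (2 * PI * x))^2 = 1).
    { rewrite E1, E2. ring. }
    replace ((exp (- (2 * PI) * (y - y0)) * cos (2 * PI * x))^2 + (exp (- (2 * PI) * (y - y0)) * sin (2 * PI * x))^2)
      with (exp (- (2 * PI) * (y - y0)) ^2) in Hc2 by (pose proof (sin2_cos2 (2*PI*x)); unfold Rsqr in *; nra).
    assert (exp (- (2 * PI) * (y - y0)) = 1).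
    { pose proof (exp_pos (- (2 * PI) * (y - y0))). nra. }
    rewrite <- exp_0 in H0. apply exp_inv in H0. apply Ey. nra. Qed.

Lemma G_near (f : C -> C) z0 l0 : Cdiff f z0 l0 -> exists M d0, 0 < d0 /\
  forall z, z <> z0 -> Cmod (Cminus z z0) < d0 ->
    Eu z0 z <> RtoC 1 /\ Cmod (Cmult (Cminus (f z) (f z0)) (Lk z0 z)) <= M.
Proof. intros Hd. destruct (Hd 1 Rlt_0_1) as [d1 [Hd1 Hdd]]. pose proof PI_pos3.
  exists (2 * (Cmod l0 + 1)), (Rmin d1 (/ (32 * PI))). split. apply Rmin_pos; auto. apply Rinv_0_lt_compat; lra.
  intros z Hne Hz. pose proof (Rmin_l d1 (/ (32 * PI))). pose proof (Rmin_r d1 (/ (32 * PI))).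
  set (h := Cmod (Cminus z z0)) in *.
  assert (Hh : 0 < h). { apply Cmod_gt_0. intro E. apply Hne. replace z with (Cplus (Cminus z z0) z0) by ring. rewrite E. ring. }
  set (u := Cmult tpi (Cminus z z0)).
  assert (Hu : Cmod u = 2 * PI * h) by (unfold u; rewrite Cmod_mult, Cmod_tpi; reflexivity).
  assert (Hu1 : Cmod u <= / 16).
  { rewrite Hu. apply Rle_trans with (2 * PI * / (32 * PI)). apply Rmult_le_compat_l; lra. right; field; lra. }
  pose proof (Cexp_rem u ltac:(lra)) as Hr.
  assert (Hr2 : Cmod (Cminus (Cminus (Cexp u) (RtoC 1)) u) <= Cmod u / 2).
  { eapply Rle_trans. apply Hr. pose proof (Cmod_ge_0 u). nra. }
  assert (HE : Cmod u / 2 <= Cmod (Cminus (Cexp u) (RtoC 1))).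
  { pose proof (Cmod_triangle (Cminus (Cexp u) (RtoC 1)) (Copp (Cminus (Cminus (Cexp u) (RtoC 1)) u))).
    rewrite Cmod_opp in H2. replace (Cplus (Cminus (Cexp u) (RtoC 1)) (Copp (Cminus (Cminus (Cexp u) (RtoC 1)) u))) with u in H2 by ring.
    lra. }
  assert (Hne1 : Eu z0 z <> RtoC 1).
  { intro E. unfold Eu in E. fold u in E. rewrite E in HE.
    replace (Cminus (RtoC 1) (RtoC 1)) with (RtoC 0) in HE by ring. rewrite Cmod_0 in HE. nra. }
  split; auto. rewrite Cmod_mult, Lk_mod by auto. unfold Eu. fold u.
  assert (Hf : Cmod (Cminus (f z) (f z0)) <= (Cmod l0 + 1) * h).
  { specialize (Hdd z ltac:(fold h; lra)). fold h in Hdd.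
    pose proof (Cmod_triangle (Cminus (Cminus (f z) (f z0)) (Cmult l0 (Cminus z z0))) (Cmult l0 (Cminus z z0))).
    replace (Cplus (Cminus (Cminus (f z) (f z0)) (Cmult l0 (Cminus z z0))) (Cmult l0 (Cminus z z0))) with (Cminus (f z) (f z0)) in H2 by ring.
    rewrite Cmod_mult in H2. fold h in H2. lra. }
  assert (HL : 2 * PI / Cmod (Cminus (Cexp u) (RtoC 1)) <= 2 / h).
  { apply Rle_trans with (2 * PI / (Cmod u / 2)).
    apply Rmult_le_compat_l. lra. apply Rinv_le_contravar. nra. lra.
    rewrite Hu. right. field. split; lra. }
  apply Rle_trans with ((Cmod l0 + 1) * h * (2 / h)).
  apply Rmult_le_compat; auto. apply Cmod_ge_0. apply Rdiv_le_0_compat. lra. nra.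
  right. field. lra. Qed.

Lemma exp_ge_1t t : 0 <= t -> 1 + t <= exp t.
Proof. intros. apply exp_ineq1_le. Qed.

Lemma decay (f : C -> C) (y1 : R) :
  0 < y1 ->
  (forall z, 0 < snd z -> exists l, Cdiff f z l) ->
  (forall x y, 0 < y -> f (x + 1, y) = f (x, y)) ->
  (forall z, y1 <= snd z -> Cmod (f z) <= 1) ->
  (forall eps, 0 < eps -> exists Y, forall z, Y < snd z -> Cmod (f z) < eps) ->
  forall y0, y1 + 1 <= y0 -> Cmod (f (0, y0)) <= 3 * exp (- (2*PI) * (y0 - y1)).
Proof. intros Hy1 Hol Per Bd Sm y0 Hy0. pose proof PI_pos3 as HPI.
  set (z0 := (0, y0)). set (f0 := f z0).
  assert (Hf0 : Cmod f0 <= 1) by (apply Bd; simpl; lra).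
  set (G := fun z => Cmult (Cminus (f z) f0) (Lk z0 z)).
  destruct (Hol z0 ltac:(simpl; lra)) as [l0 Hl0].
  destruct (G_near f z0 l0 Hl0) as [M [d0 [Hd0 HM]]].
  assert (Iden : forall Y, y0 + 1 < Y ->
     CRInt (fun x => G (x, y1)) (-/2) (/2) = CRInt (fun x => G (x, Y)) (-/2) (/2)).
  { intros Y HY.
    assert (HRI : RI G (-/2) (/2) y1 Y = RtoC 0).
    { apply (goursat_pt G (-/2) (/2) y1 Y 0 y0 M d0); try lra.
      - intros z [Hz1 Hz2] Hne. apply CD_Cdiff. unfold G. apply CD_mult.
        + apply CD_minus; [|apply CD_const]. destruct (Hol z ltac:(lra)) as [l Hl]. exists l. apply Cdiff_CDer; auto.
        + apply CD_Lk. apply (Eu_ne1 0 y0 z eq_refl). apply Rabs_le; lra. exact Hne.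
      - intros z Hz Hne Hd. apply (HM z Hne Hd). }
    unfold RI in HRI.
    rewrite (CRInt_ext (fun y => G (/2, y)) (fun y => G (-/2, y))) in HRI.
    2: { intros y Hy. unfold G. replace (/2) with (-/2 + 1) at 1 2 by field. rewrite Lk_per, Per. reflexivity.
         rewrite Rmin_left, Rmax_right in Hy; lra. }
    replace (Cminus (CRInt (fun y => G (-/2, y)) y1 Y) (CRInt (fun y => G (-/2, y)) y1 Y)) with (RtoC 0) in HRI by ring.
    replace (CRInt (fun x => G (x, y1)) (-/2) (/2)) with
      (Cplus (Cplus (Cminus (CRInt (fun x => G (x, y1)) (-/2) (/2)) (CRInt (fun x => G (x, Y)) (-/2) (/2))) (Cmult Ci (RtoC 0))) (CRInt (fun x => G (x, Y)) (-/2) (/2))) by ring.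
    rewrite HRI. ring. }
  assert (Gcont : forall y, y1 <= y -> y <> y0 -> forall x, Rabs x <= /2 -> Ccont G (x, y)).
  { intros y Hy Hne x Hx. destruct (CD_Cdiff G (x,y)) as [l Hl].
    unfold G. apply CD_mult.
    + apply CD_minus; [|apply CD_const]. destruct (Hol (x,y) ltac:(simpl; lra)) as [l' Hl']. exists l'. apply Cdiff_CDer; auto.
    + apply CD_Lk. apply (Eu_ne1 0 y0 (x,y) eq_refl). simpl; auto. intro E; injection E; intros; lra.
    + eapply Cdiff_cont; eauto. }
  set (q := exp (- (2*PI) * (y0 - y1))).
  assert (Hq : 0 < q) by apply exp_pos.
  assert (Bot : Cmod (CRInt (fun x => G (x, y1)) (-/2) (/2)) <= 6 * PI * q).
  { replace (6 * PI * q) with ((/2 - - /2) * (6 * PI * q)) by field.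
    apply CRInt_bound. lra. apply ex_hseg. lra. intros x Hx. apply Gcont; try lra. apply Rabs_le; lra.
    intros x Hx. unfold G.
    assert (Hne : Eu z0 (x, y1) <> RtoC 1) by (apply (Eu_ne1 0 y0 (x,y1) eq_refl); [simpl; apply Rabs_le; lra| intro E; injection E; intros; lra]).
    rewrite Cmod_mult, Lk_mod by auto.
    assert (HQ : Cmod (Eu z0 (x, y1)) = / q).
    { rewrite Eu_mod. unfold q. rewrite <- exp_Ropp. f_equal. simpl. ring. }
    assert (HQ3 : 3 <= / q).
    { rewrite <- HQ, Eu_mod. simpl. apply Rle_trans with (1 + (- (2 * PI) * (y1 - y0))). nra. apply exp_ge_1t. nra. }
    assert (HE1 : / q - 1 <= Cmod (Cminus (Eu z0 (x, y1)) (RtoC 1))).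
    { rewrite <- HQ. pose proof (Cmod_rev_tri (Eu z0 (x, y1)) (RtoC 1)). rewrite Cmod_1 in H. lra. }
    assert (Hfx : Cmod (Cminus (f (x, y1)) f0) <= 2).
    { unfold Cminus. eapply Rle_trans. apply Cmod_triangle. rewrite Cmod_opp. pose proof (Bd (x,y1) ltac:(simpl; lra)). lra. }
    assert (HL : 2 * PI / Cmod (Cminus (Eu z0 (x, y1)) (RtoC 1)) <= 3 * PI * q).
    { apply Rle_trans with (2 * PI / (/ q - 1)). apply Rmult_le_compat_l. lra. apply Rinv_le_contravar; lra.
      assert (q <= /3). { rewrite <- (Rinv_inv q). apply Rinv_le_contravar; lra. }
      apply Rmult_le_reg_r with (/ q - 1). lra.
      replace (2 * PI / (/ q - 1) * (/ q - 1)) with (2 * PI) by (field; repeat split; lra).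
      replace (3 * PI * q * (/ q - 1)) with (3 * PI - 3 * PI * q) by (field; lra).
      nra. }
    apply Rle_trans with (2 * (3 * PI * q)). apply Rmult_le_compat; auto. apply Cmod_ge_0.
    apply Rdiv_le_0_compat. lra. apply Rlt_le_trans with (/q - 1); lra. lra. }
  assert (Main : forall eta, 0 < eta -> 2 * PI * Cmod f0 <= 6 * PI * q + 8 * PI * eta).
  { intros eta Heta. destruct (Sm eta Heta) as [Ye HYe].
    set (Y := Rmax (y0 + 2) (Rmax (Ye + 1) (y0 + / (2 * PI * eta)))).
    assert (HY1 : y0 + 2 <= Y) by apply Rmax_l.
    assert (HY2 : Ye + 1 <= Y) by (eapply Rle_trans; [apply Rmax_l|apply Rmax_r]).
    assert (HY3 : y0 + / (2 * PI * eta) <= Y) by (eapply Rle_trans; [apply Rmax_r|apply Rmax_r]).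
    set (p := exp (- (2*PI) * (Y - y0))).
    assert (Hp0 : 0 < p) by apply exp_pos.
    assert (Hpe : p <= eta /\ p <= /2).
    { assert (Ht : 1 + 2 * PI * (Y - y0) <= / p).
      { unfold p. rewrite <- exp_Ropp. replace (- (- (2 * PI) * (Y - y0))) with (2 * PI * (Y - y0)) by ring. apply exp_ge_1t. nra. }
      assert (/ eta <= 2 * PI * (Y - y0)).
      { apply Rmult_le_reg_l with (/ (2 * PI)). apply Rinv_0_lt_compat; lra.
        replace (/ (2 * PI) * (2 * PI * (Y - y0))) with (Y - y0) by (field; lra).
        replace (/ (2 * PI) * / eta) with (/ (2 * PI * eta)) by (field; lra). lra. }
      split.
      - rewrite <- (Rinv_inv eta), <- (Rinv_inv p). apply Rinv_le_contravar. apply Rinv_0_lt_compat; lra. lra.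
      - rewrite <- (Rinv_inv p). replace (/2) with (/ 2) by reflexivity. apply Rinv_le_contravar. lra. nra. }
    set (K := Cmult f0 tpi).
    assert (Top : Cmod (Cminus (CRInt (fun x => G (x, Y)) (-/2) (/2)) K) <= 8 * PI * eta).
    { assert (Hex : CexRInt (fun x => G (x, Y)) (-/2) (/2)).
      { apply ex_hseg. lra. intros x Hx. apply Gcont; try lra. apply Rabs_le; lra. }
      replace K with (CRInt (fun _ => K) (-/2) (/2)) by (rewrite CRInt_const; replace (/2 - - /2) with 1 by field; ring).
      rewrite <- CRInt_minus; auto. 2: { apply (@ex_RInt_const C_R_NormedModule). }
      replace (8 * PI * eta) with ((/2 - - /2) * (8 * PI * eta)) by field.
      apply CRInt_bound. lra.
      { apply (@ex_RInt_minus C_R_NormedModule); auto. apply (@ex_RInt_const C_R_NormedModule). }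
      intros x Hx.
      assert (Hne : Eu z0 (x, Y) <> RtoC 1) by (apply (Eu_ne1 0 y0 (x,Y) eq_refl); [simpl; apply Rabs_le; lra| intro E; injection E; intros; lra]).
      assert (HP : Cmod (Eu z0 (x, Y)) = p) by (rewrite Eu_mod; unfold p; f_equal).
      assert (HE1 : 1 - p <= Cmod (Cminus (Eu z0 (x, Y)) (RtoC 1))).
      { rewrite <- HP. pose proof (Cmod_rev_tri (RtoC 1) (Eu z0 (x, Y))). rewrite Cmod_1 in H.
        assert (Cmod (Cminus (Eu z0 (x, Y)) (RtoC 1)) = Cmod (Cminus (RtoC 1) (Eu z0 (x, Y)))) by (rewrite <- Cmod_opp; f_equal; ring).
        lra. }
      unfold G, K.
      replace (Cminus (Cmult (Cminus (f (x, Y)) f0) (Lk z0 (x, Y))) (Cmult f0 tpi)) with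
        (Cminus (Cmult (f (x,Y)) (Lk z0 (x, Y))) (Cmult f0 (Cplus (Lk z0 (x,Y)) tpi))) by ring.
      unfold Cminus. eapply Rle_trans. apply Cmod_triangle. rewrite Cmod_opp, !Cmod_mult.
      rewrite Lk_mod, Lk_plus_mod by auto. rewrite HP.
      assert (Hfy : Cmod (f (x, Y)) <= eta) by (left; apply HYe; simpl; lra).
      assert (A1 : 2 * PI / Cmod (Cminus (Eu z0 (x, Y)) (RtoC 1)) <= 4 * PI).
      { apply Rle_trans with (2 * PI / (1 - p)). apply Rmult_le_compat_l. lra. apply Rinv_le_contravar; lra.
        apply Rmult_le_reg_r with (1 - p). lra. replace (2 * PI / (1 - p) * (1 - p)) with (2 * PI) by (field; lra). nra. }
      assert (A2 : 2 * PI * p / Cmod (Cminus (Eu z0 (x, Y)) (RtoC 1)) <= 4 * PI * eta).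
      { apply Rle_trans with (2 * PI * p / (1 - p)). apply Rmult_le_compat_l. nra. apply Rinv_le_contravar; lra.
        apply Rmult_le_reg_r with (1 - p). lra. replace (2 * PI * p / (1 - p) * (1 - p)) with (2 * PI * p) by (field; lra). destruct Hpe. apply Rle_trans with (2*PI*eta). apply Rmult_le_compat_l; lra. assert (0 <= (PI*eta)*(1 - 2*p)) by (apply Rmult_le_pos; nra). nra. }
      pose proof (Cmod_ge_0 (f (x, Y))).
      assert (0 <= 2 * PI / Cmod (Cminus (Eu z0 (x, Y)) (RtoC 1))).
      { apply Rdiv_le_0_compat. lra. lra. }
      assert (0 <= 2 * PI * p / Cmod (Cminus (Eu z0 (x, Y)) (RtoC 1))).
      { apply Rdiv_le_0_compat. nra. lra. }
      pose proof (Cmod_ge_0 f0). nra. }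
    rewrite <- (Iden Y ltac:(lra)) in Top.
    assert (HK : Cmod K = 2 * PI * Cmod f0) by (unfold K; rewrite Cmod_mult, Cmod_tpi; ring).
    pose proof (Cmod_rev_tri K (CRInt (fun x => G (x, y1)) (-/2) (/2))).
    assert (Cmod (Cminus K (CRInt (fun x : R => G (x, y1)) (- / 2) (/ 2))) =
      Cmod (Cminus (CRInt (fun x : R => G (x, y1)) (- / 2) (/ 2)) K)) by (rewrite <- Cmod_opp; f_equal; ring).
    lra. }
  fold z0. fold f0.
  apply Rnot_lt_le. intro Hlt.
  set (eta := (Cmod f0 - 3 * q) / 8).
  assert (Heta : 0 < eta) by (unfold eta; lra).
  specialize (Main eta Heta). unfold eta in Main. nra. Qed.

Lemma ballCR_of (x y : C) (e : R) : Cmod (Cminus y x) < e -> @ball C_R_NormedModule x e y.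
Proof. intros H. pose proof (Cmod_fst_le (Cminus y x)). pose proof (Cmod_snd_le (Cminus y x)).
  destruct x as [a b], y as [c d]. simpl in *. split.
  change (Rabs (c + - a) < e). lra. change (Rabs (d + - b) < e). lra. Qed.

Lemma ballCR_to (x y : C) (e : R) : @ball C_R_NormedModule x e y -> Cmod (Cminus y x) < 2 * e.
Proof. intros H. pose proof (Cmod_le_sum (Cminus y x)). destruct x as [a b], y as [c d].
  destruct H as [H1 H2]. change (Rabs (c + - a) < e) in H1. change (Rabs (d + - b) < e) in H2.
  simpl in *. lra. Qed.

Lemma cauchy_lim_right (I : R -> C) :
  (forall eps, 0 < eps -> exists del, 0 < del /\ forall a a', 0 < a < del -> 0 < a' < del -> Cmod (Cminus (I a) (I a')) < eps) ->
  exists l, forall eps, 0 < eps -> exists del, 0 < del /\ forall a, 0 < a < del -> Cmod (Cminus (I a) l) < eps.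
Proof. intros HC.
  set (F := filtermap I (at_right 0)).
  assert (PF : ProperFilter F) by (apply filtermap_proper_filter, at_right_proper_filter).
  assert (CF : @cauchy (CompleteNormedModule.CompleteSpace R_AbsRing C_R_CompleteNormedModule) F).
  { intros eps. destruct (HC eps (cond_pos eps)) as [d [Hd Hdd]].
    exists (I (d/2)). unfold F, filtermap. exists (mkposreal d Hd). intros a Ha Ha0.
    apply ballCR_of. change (Rabs (a + - 0) < d) in Ha.
    rewrite Ropp_0, Rplus_0_r, Rabs_right in Ha by lra.
    rewrite <- Cmod_opp. replace (Copp (Cminus (I a) (I (d/2)))) with (Cminus (I (d/2)) (I a)) by ring.
    apply Hdd; lra. }
  exists (@lim (CompleteNormedModule.CompleteSpace R_AbsRing C_R_CompleteNormedModule) F). intros eps Heps.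
  destruct (@complete_cauchy (CompleteNormedModule.CompleteSpace R_AbsRing C_R_CompleteNormedModule) F PF CF (mkposreal (eps/2) ltac:(lra))) as [d Hd].
  exists d. split. apply cond_pos. intros a Ha. specialize (Hd a).
  assert (Hb : @ball R_UniformSpace 0 d a). { change (Rabs (a + - 0) < d). rewrite Ropp_0, Rplus_0_r, Rabs_right; lra. }
  specialize (Hd Hb ltac:(lra)). apply ballCR_to in Hd. simpl in Hd. lra. Qed.

Lemma le_eps (x y : R) : (forall eps, 0 < eps -> x <= y + eps) -> x <= y.
Proof. intros H. apply Rnot_lt_le. intro Hlt. specialize (H ((x - y)/2) ltac:(lra)). lra. Qed.

Lemma CRInt_swap g a b : CexRInt g b a -> CRInt g a b = Copp (CRInt g b a).
Proof. intros H. unfold CRInt. rewrite <- (@opp_RInt_swap C_R_CompleteNormedModule); auto. Qed.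

Lemma exp_neg_le t : 0 < t -> exp (- t) <= / t.
Proof. intros Ht. rewrite exp_Ropp. apply Rinv_le_contravar. auto.
  pose proof (exp_ineq1_le t). lra. Qed.

Lemma improper_exists (g : R -> C) (A : R) :
  0 <= A ->
  (forall t, 0 < t -> @continuous R_UniformSpace C_R_NormedModule g t) ->
  (forall t, 0 < t <= 1 -> Cmod (g t) <= A) ->
  (forall t, 1 <= t -> Cmod (g t) <= A * exp (- t)) ->
  exists l, @is_RInt_gen C_R_NormedModule g (at_right 0) (Rbar_locally p_infty) l /\ Cmod l <= 2 * A.
Proof. intros HA Hc B1 B2.
  assert (Ex : forall a b, 0 < a -> 0 < b -> CexRInt g a b).
  { intros a b Ha Hb. apply (@ex_RInt_continuous C_R_CompleteNormedModule). intros z Hz. apply Hc.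
    apply Rlt_le_trans with (Rmin a b); [apply Rmin_pos|]; lra. }
  assert (Bd1 : forall a a', 0 < a -> 0 < a' -> a <= 1 -> a' <= 1 -> Cmod (CRInt g a a') <= Rabs (a' - a) * A).
  { intros a a' Ha Ha' Ha1 Ha1'. destruct (Rle_dec a a').
    - rewrite Rabs_right by lra. apply CRInt_bound; auto. intros; apply B1; lra.
    - rewrite CRInt_swap, Cmod_opp by (apply Ex; lra). rewrite Rabs_left1 by lra. replace (- (a' - a)) with (a - a') by ring.
      apply CRInt_bound; auto. lra. intros; apply B1; lra. }
  assert (Bd2 : forall b b', 1 <= b <= b' -> Cmod (CRInt g b b') <= A * exp (- b)).
  { intros b b' Hb. rewrite <- normCR.
    apply Rle_trans with (A * exp (-b) - A * exp (- b')).
    2: { pose proof (exp_pos (- b')). nra. }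
    apply (@norm_RInt_le C_R_NormedModule g (fun t => A * exp (-t)) b b' _ (A * exp (-b) - A * exp (- b'))).
    lra. intros x Hx. rewrite normCR. apply B2; lra.
    apply (@RInt_correct C_R_CompleteNormedModule). apply Ex; lra.
    assert (HI : @is_RInt R_NormedModule (fun t => A * exp (-t)) b b' (minus ((fun t => - A * exp (-t)) b') ((fun t => - A * exp (-t)) b))).
    { apply (@is_RInt_derive R_CompleteNormedModule (fun t => - A * exp (-t)) (fun t => A * exp (-t))).
      - intros x _. auto_derive; auto. ring.
      - intros x _. apply (@ex_derive_continuous R_AbsRing R_NormedModule). auto_derive; auto. }
    replace (A * exp (- b) - A * exp (- b')) with (minus ((fun t => - A * exp (-t)) b') ((fun t => - A * exp (-t)) b))
      by (unfold minus, plus, opp; simpl; ring).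
    exact HI. }
  assert (Bd2' : forall b b', 1 <= b -> 1 <= b' -> Cmod (CRInt g b b') <= A * exp (- Rmin b b')).
  { intros b b' Hb Hb'. destruct (Rle_dec b b').
    - rewrite Rmin_left by lra. apply Bd2; lra.
    - rewrite Rmin_right by lra. rewrite CRInt_swap, Cmod_opp by (apply Ex; lra). apply Bd2; lra. }
  destruct (cauchy_lim_right (fun a => CRInt g a 1)) as [l1 Hl1].
  { intros eps Heps. exists (Rmin 1 (eps / (A + 1))). split. apply Rmin_pos; [lra|apply Rdiv_lt_0_compat; lra].
    intros a a' Ha Ha'. pose proof (Rmin_l 1 (eps / (A + 1))). pose proof (Rmin_r 1 (eps / (A + 1))).
    replace (Cminus (CRInt g a 1) (CRInt g a' 1)) with (CRInt g a a').
    2: { rewrite <- (CRInt_Chasles g a a' 1) by (apply Ex; lra). ring. }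
    eapply Rle_lt_trans. apply Bd1; lra.
    assert (Rabs (a' - a) < eps / (A + 1)) by (apply Rabs_def1; lra).
    apply Rle_lt_trans with (eps / (A+1) * A). apply Rmult_le_compat_r; lra.
    apply Rlt_le_trans with (eps / (A + 1) * (A + 1)). apply Rmult_lt_compat_l. apply Rdiv_lt_0_compat; lra. lra.
    right; field; lra. }
  destruct (cauchy_lim_right (fun a => CRInt g 1 (/ a))) as [l2 Hl2].
  { intros eps Heps. exists (Rmin 1 (eps / (A + 1))). split. apply Rmin_pos; [lra|apply Rdiv_lt_0_compat; lra].
    intros a a' Ha Ha'. pose proof (Rmin_l 1 (eps / (A + 1))). pose proof (Rmin_r 1 (eps / (A + 1))).
    assert (Hi : 1 <= / a) by (rewrite <- Rinv_1; apply Rinv_le_contravar; lra).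
    assert (Hi' : 1 <= / a') by (rewrite <- Rinv_1; apply Rinv_le_contravar; lra).
    replace (Cminus (CRInt g 1 (/ a)) (CRInt g 1 (/ a'))) with (CRInt g (/a') (/a)).
    2: { rewrite <- (CRInt_Chasles g 1 (/a') (/a)) by (apply Ex; lra). ring. }
    eapply Rle_lt_trans. apply Bd2'; lra.
    assert (exp (- Rmin (/ a') (/ a)) <= Rmax a a').
    { eapply Rle_trans. apply exp_neg_le. apply Rmin_pos; lra.
      destruct (Rle_dec (/a') (/a)).
      - rewrite Rmin_left by lra. rewrite Rinv_inv. apply Rmax_r.
      - rewrite Rmin_right by lra. rewrite Rinv_inv. apply Rmax_l. }
    assert (Rmax a a' < eps / (A + 1)) by (apply Rmax_lub_lt; lra).
    apply Rle_lt_trans with (A * Rmax a a'). apply Rmult_le_compat_l; lra.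
    apply Rle_lt_trans with (A * (eps / (A + 1))). apply Rmult_le_compat_l; lra.
    apply Rlt_le_trans with ((A + 1) * (eps / (A + 1))). apply Rmult_lt_compat_r. apply Rdiv_lt_0_compat; lra. lra.
    right; field; lra. }
  exists (Cplus l1 l2). split.
  - intros P [eps HP]. unfold filtermapi.
    destruct (Hl1 (eps/2) ltac:(destruct eps; simpl; lra)) as [d1 [Hd1 H1]].
    destruct (Hl2 (eps/2) ltac:(destruct eps; simpl; lra)) as [d2 [Hd2 H2]].
    apply (Filter_prod _ _ _ (fun a => 0 < a < Rmin d1 1) (fun b => Rmax (/ d2) 1 < b)).
    + exists (mkposreal (Rmin d1 1) ltac:(apply Rmin_pos; lra)). intros a Ha Ha0. simpl in *.
      change (Rabs (a + - 0) < Rmin d1 1) in Ha. rewrite Ropp_0, Rplus_0_r, Rabs_right in Ha; lra.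
    + exists (Rmax (/ d2) 1). auto.
    + intros a b Ha Hb. simpl. pose proof (Rmax_l (/d2) 1). pose proof (Rmax_r (/d2) 1). pose proof (Rmin_l d1 1).
      exists (CRInt g a b). split.
      * apply (@RInt_correct C_R_CompleteNormedModule). apply Ex; lra.
      * apply HP. apply ballCR_of.
        rewrite <- (CRInt_Chasles g a 1 b) by (apply Ex; lra).
        specialize (H1 a ltac:(lra)).
        assert (Hb' : 0 < / b < d2).
        { split. apply Rinv_0_lt_compat; lra. rewrite <- (Rinv_inv d2). apply Rinv_lt_contravar.
          apply Rmult_lt_0_compat; [apply Rinv_0_lt_compat|]; lra. lra. }
        specialize (H2 (/ b) Hb'). rewrite Rinv_inv in H2.
        replace (Cminus (Cplus (CRInt g a 1) (CRInt g 1 b)) (Cplus l1 l2)) with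
          (Cplus (Cminus (CRInt g a 1) l1) (Cminus (CRInt g 1 b) l2)) by ring.
        eapply Rle_lt_trans. apply Cmod_triangle. lra.
  - apply le_eps. intros eps Heps.
    destruct (Hl1 (eps/2) ltac:(lra)) as [d1 [Hd1 H1]].
    destruct (Hl2 (eps/2) ltac:(lra)) as [d2 [Hd2 H2]].
    set (a := Rmin d1 1 / 2). assert (Ha : 0 < a < d1 /\ a <= 1).
    { unfold a. pose proof (Rmin_l d1 1). pose proof (Rmin_r d1 1). assert (0 < Rmin d1 1) by (apply Rmin_pos; lra). lra. }
    set (a' := Rmin d2 1 / 2). assert (Ha' : 0 < a' < d2 /\ a' <= 1).
    { unfold a'. pose proof (Rmin_l d2 1). pose proof (Rmin_r d2 1). assert (0 < Rmin d2 1) by (apply Rmin_pos; lra). lra. }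
    specialize (H1 a ltac:(lra)). specialize (H2 a' ltac:(lra)).
    assert (Hi : 1 <= / a') by (rewrite <- Rinv_1; apply Rinv_le_contravar; lra).
    pose proof (Bd1 a 1 ltac:(lra) ltac:(lra) ltac:(lra) ltac:(lra)).
    pose proof (Bd2 1 (/a') ltac:(lra)).
    rewrite Rabs_right in H by lra.
    assert (exp (- (1)) <= 1) by (pose proof (exp_increasing (- (1)) 0 ltac:(lra)) as He; rewrite exp_0 in He; lra).
    replace (Cplus l1 l2) with (Cplus (Cplus (CRInt g a 1) (CRInt g 1 (/ a')))
      (Copp (Cplus (Cminus (CRInt g a 1) l1) (Cminus (CRInt g 1 (/ a')) l2)))) by ring.
    eapply Rle_trans. apply Cmod_triangle. rewrite Cmod_opp.
    pose proof (Cmod_triangle (CRInt g a 1) (CRInt g 1 (/ a'))).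
    pose proof (Cmod_triangle (Cminus (CRInt g a 1) l1) (Cminus (CRInt g 1 (/ a')) l2)).
    assert ((1 - a) * A <= A) by nra. assert (A * exp (- (1)) <= A) by nra. lra. Qed.

Lemma Carg_pos (r : R) : 0 < r -> Carg (r, 0) = 0.
Proof. intros Hr. unfold Carg; simpl. destruct (Rlt_dec 0 r); [|lra].
  replace (0 / r) with 0 by (field; lra). apply atan_0. Qed.

Lemma cpow_pos (r a : R) : 0 < r -> cpow (r, 0) a = RtoC (Rpower r a).
Proof. intros Hr.
  assert (H : Cmod (r,0) = r). { unfold Cmod; simpl. replace (r * (r*1) + 0 * (0*1)) with (r^2) by ring. apply sqrt_pow2; lra. }
  unfold cpow. rewrite Carg_pos by auto. rewrite H.
  destruct (Req_EM_T r 0) as [E|E]. lra.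
  replace (a * 0) with 0 by ring. rewrite cos_0, sin_0. unfold Cmult, RtoC; simpl. f_equal; ring. Qed.

Lemma Rpower_1_base a : Rpower 1 a = 1.
Proof. unfold Rpower. rewrite ln_1, Rmult_0_r. apply exp_0. Qed.

Lemma cpow_one a : cpow (RtoC 1) a = RtoC 1.
Proof. unfold RtoC. rewrite cpow_pos by lra. rewrite Rpower_1_base. reflexivity. Qed.

Lemma Cmod_cpow (z : C) (a : R) : z <> RtoC 0 -> Cmod (cpow z a) = Rpower (Cmod z) a.
Proof. intros Hz. unfold cpow. destruct (Req_EM_T (Cmod z) 0) as [E|E].
  - exfalso. apply Hz. apply Cmod_eq_0. exact E.
  - cbv beta iota. cbn [ssrbool.is_left]. rewrite Cmod_mult. rewrite Cmod_R, Rabs_right by (left; apply exp_pos).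
    unfold Cmod at 2; simpl. replace (cos (a * Carg z) * (cos (a * Carg z) * 1) + sin (a * Carg z) * (sin (a * Carg z) * 1)) with 1
      by (pose proof (sin2_cos2 (a * Carg z)); unfold Rsqr in *; nra). rewrite sqrt_1. ring. Qed.

Lemma Cmod_cpow_le (z : C) (a : R) : Cmod (cpow z a) <= Rpower (Cmod z) a.
Proof. destruct (Req_dec (Cmod z) 0) as [E|E].
  - unfold cpow. destruct (Req_EM_T (Cmod z) 0) as [E'|E']; [|contradiction]. cbn [ssrbool.is_left].
    rewrite Cmod_0. left; apply exp_pos.
  - rewrite Cmod_cpow. lra. intro Hz. rewrite Hz, Cmod_0 in E. lra. Qed.

Lemma Cmod_Ci : Cmod Ci = 1.
Proof. unfold Cmod, Ci; simpl. replace (0*(0*1) + 1*(1*1)) with 1 by ring. apply sqrt_1. Qed.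

Lemma Cmod_cpow_Ci a : Cmod (cpow Ci a) = 1.
Proof. rewrite Cmod_cpow, Cmod_Ci, Rpower_1_base. reflexivity.
  intro E. injection E. lra. Qed.

Lemma per_of_slash k (f : C -> C) : (forall z, upper z -> slash k f 1 1 0 1 z = f z) ->
  forall x y, 0 < y -> f (x + 1, y) = f (x, y).
Proof. intros H x y Hy. specialize (H (x,y) Hy). unfold slash in H.
  replace (kronecker 0 1) with 1%Z in H by reflexivity.
  replace (eps 1) with (RtoC 1) in H by reflexivity.
  replace (Cplus (Cmult (RtoC (IZR 0)) (x, y)) (RtoC (IZR 1))) with (RtoC 1) in H
    by (unfold Cplus, Cmult, RtoC; simpl; f_equal; ring).
  rewrite !cpow_one in H.
  replace (mob 1 1 0 1 (x, y)) with (x + 1, y) in H.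
  - rewrite <- H. unfold Cmult, RtoC; simpl. destruct (f (x+1, y)). simpl. f_equal; ring.
  - unfold mob, Cdiv, Cinv, Cplus, Cmult, RtoC; simpl. f_equal; field. Qed.

Lemma small_of_cusp k (f : C -> C) :
  (forall a b c d, (a * d - b * c = 1)%Z -> forall e, 0 < e -> exists Y, forall z, Y < snd z ->
       Cmod (Cmult (cpow (Cplus (Cmult (IZR c) z) (IZR d)) (- k)) (f (mob a b c d z))) < e) ->
  forall e, 0 < e -> exists Y, forall z, Y < snd z -> Cmod (f z) < e.
Proof. intros H e He. destruct (H 1%Z 0%Z 0%Z 1%Z eq_refl e He) as [Y HY]. exists Y. intros z Hz.
  specialize (HY z Hz).
  replace (Cplus (Cmult (RtoC (IZR 0)) z) (RtoC (IZR 1))) with (RtoC 1) in HY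
    by (destruct z; unfold Cplus, Cmult, RtoC; simpl; f_equal; ring).
  rewrite cpow_one in HY.
  replace (mob 1 0 0 1 z) with z in HY.
  - rewrite Cmod_mult, Cmod_1, Rmult_1_l in HY. exact HY.
  - destruct z. unfold mob, Cdiv, Cinv, Cplus, Cmult, RtoC; simpl. f_equal; field. Qed.

Lemma W_rel k N (f : C -> C) : (0 < N)%nat -> (forall z, upper z -> slashW k N f z = f z) ->
  forall t, 0 < t -> f (0, t) = Cmult (RtoC (Rpower (sqrt (INR N) * t) (- k))) (f (0, / (INR N * t))).
Proof. intros HN H t Ht. assert (HN' : 0 < INR N) by (apply lt_0_INR; auto).
  assert (Hs : 0 < sqrt (INR N)) by (apply sqrt_lt_R0; auto).
  specialize (H (0,t) Ht). unfold slashW in H. rewrite <- H.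
  replace (Cmult (Cmult (Copp Ci) (RtoC (sqrt (INR N)))) (0, t)) with (sqrt (INR N) * t, 0)
    by (unfold Cmult, Copp, Ci, RtoC; simpl; f_equal; ring).
  rewrite cpow_pos by (apply Rmult_lt_0_compat; auto).
  f_equal. f_equal. unfold Copp, Cinv, Cmult, RtoC; simpl. f_equal; field; lra. Qed.

Lemma exp_mono x y : x <= y -> exp x <= exp y.
Proof. intros [H|H]. left; apply exp_increasing; auto. subst; lra. Qed.

Lemma ln_le_sub1 z : 0 < z -> ln z <= z - 1.
Proof. intros Hz. pose proof (exp_ineq1_le (ln z)). rewrite exp_ln in H by auto. lra. Qed.

Lemma Rpower_exp_bound v s c : 0 < v -> 0 < s -> 0 < c -> Rpower v s <= Rpower (s / c) s * exp (c * v).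
Proof. intros Hv Hs Hc. unfold Rpower. rewrite <- exp_plus. apply exp_mono.
  assert (ln v = ln (s/c) + ln (c * v / s)).
  { rewrite <- ln_mult. f_equal. field. lra. apply Rdiv_lt_0_compat; lra. apply Rdiv_lt_0_compat; nra. }
  pose proof (ln_le_sub1 (c * v / s) ltac:(apply Rdiv_lt_0_compat; nra)).
  rewrite H. replace (c * v) with (s * (c * v / s)) at 2 by (field; lra). nra. Qed.

Lemma Ccont_vline (f : C -> C) t : Ccont f (0, t) ->
  continuity_pt (fun s => Cmod (f (0, s))) t.
Proof. intros Hc eps Heps. destruct (Hc eps Heps) as [d [Hd Hdd]].
  exists d. split. auto. intros s [_ Hs]. unfold R_dist in *. simpl in *. unfold R_dist in Hs.
  assert (Cmod (Cminus (0,s) (0,t)) < d).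
  { eapply Rle_lt_trans. apply Cmod_le_sum. simpl. replace (0 + - 0) with 0 by ring. rewrite Rabs_R0.
    unfold Rminus in Hs. lra. }
  specialize (Hdd (0,s) H). pose proof (Cmod_rev_tri (f (0,s)) (f (0,t))).
  pose proof (Cmod_rev_tri (f (0,t)) (f (0,s))).
  assert (Cmod (Cminus (f (0, t)) (f (0, s))) = Cmod (Cminus (f (0, s)) (f (0, t)))) by (rewrite <- Cmod_opp; f_equal; ring).
  apply Rabs_def1; lra. Qed.

Lemma fbounds (f : C -> C) (k : R) (N : nat) :
  0 < k -> (0 < N)%nat ->
  (forall z, 0 < snd z -> exists l, Cdiff f z l) ->
  (forall x y, 0 < y -> f (x + 1, y) = f (x, y)) ->
  (forall e, 0 < e -> exists Y, forall z, Y < snd z -> Cmod (f z) < e) ->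
  (forall t, 0 < t -> f (0, t) = Cmult (RtoC (Rpower (sqrt (INR N) * t) (- k))) (f (0, / (INR N * t)))) ->
  exists B D T1, 0 < T1 /\ 0 <= B /\ 0 <= D /\ (forall t, 0 < t -> Cmod (f (0, t)) <= B) /\
    (forall t, T1 <= t -> Cmod (f (0, t)) <= D * exp (- (2 * PI) * t)).
Proof. intros Hk HN Hol Per Sm Wr. pose proof PI_pos3 as HPI.
  assert (HN' : 0 < INR N) by (apply lt_0_INR; auto).
  assert (Hs : 0 < sqrt (INR N)) by (apply sqrt_lt_R0; auto).
  destruct (Sm 1 Rlt_0_1) as [Y0 HY0].
  set (y1 := Rmax Y0 0 + 1).
  assert (Hy1 : 0 < y1 /\ Y0 < y1). { unfold y1. pose proof (Rmax_l Y0 0). pose proof (Rmax_r Y0 0). lra. }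
  assert (Bd : forall z, y1 <= snd z -> Cmod (f z) <= 1). { intros z Hz. left. apply HY0. lra. }
  pose proof (decay f y1 ltac:(lra) Hol Per Bd Sm) as Dec.
  set (D := 3 * exp (2 * PI * y1)). set (T1 := y1 + 1).
  assert (HD : forall t, T1 <= t -> Cmod (f (0, t)) <= D * exp (- (2 * PI) * t)).
  { intros t Ht. eapply Rle_trans. apply Dec. unfold T1 in Ht; lra. unfold D. rewrite Rmult_assoc, <- exp_plus.
    right. f_equal. f_equal. ring. }
  set (t0 := / (INR N * T1)).
  assert (Ht0 : 0 < t0) by (unfold t0; apply Rinv_0_lt_compat; unfold T1; nra).
  set (B0 := Rpower (k / (2 * PI / sqrt (INR N))) k * D).
  assert (Hsmall : forall t, 0 < t <= t0 -> Cmod (f (0, t)) <= B0).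
  { intros t [Ht Ht']. rewrite Wr by auto. rewrite Cmod_mult, Cmod_R, Rabs_right by (left; apply exp_pos).
    set (u := / (INR N * t)).
    assert (Hu : T1 <= u).
    { unfold u. unfold t0 in Ht'. replace T1 with (/ (INR N * / (INR N * T1))) by (field; unfold T1; lra).
      apply Rinv_le_contravar. apply Rmult_lt_0_compat; auto. apply Rmult_le_compat_l; lra. }
    assert (Hu0 : 0 < u) by (unfold T1 in Hu; lra).
    assert (Hp : Rpower (sqrt (INR N) * t) (- k) = Rpower (sqrt (INR N) * u) k).
    { unfold Rpower. f_equal.
      assert (sqrt (INR N) * t = / (sqrt (INR N) * u)).
      { unfold u. assert (E : INR N = sqrt (INR N) * sqrt (INR N)) by (rewrite sqrt_sqrt; lra).
        set (sN := sqrt (INR N)) in *. rewrite E. field. split; lra. }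
      rewrite H, ln_Rinv by (apply Rmult_lt_0_compat; auto). ring. }
    rewrite Hp. specialize (HD u Hu).
    pose proof (Rpower_exp_bound (sqrt (INR N) * u) k (2 * PI / sqrt (INR N)) ltac:(nra) Hk ltac:(apply Rdiv_lt_0_compat; lra)).
    replace (2 * PI / sqrt (INR N) * (sqrt (INR N) * u)) with (2 * PI * u) in H by (field; lra).
    apply Rle_trans with (Rpower (sqrt (INR N) * u) k * (D * exp (- (2 * PI) * u))).
    apply Rmult_le_compat_l. left; apply exp_pos. auto.
    unfold B0. apply Rle_trans with (Rpower (k / (2 * PI / sqrt (INR N))) k * exp (2 * PI * u) * (D * exp (- (2 * PI) * u))).
    apply Rmult_le_compat_r. unfold D. pose proof (exp_pos (2*PI*y1)). pose proof (exp_pos (- (2 * PI) * u)). nra. auto.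
    right. replace (Rpower (k / (2 * PI / sqrt (INR N))) k * exp (2 * PI * u) * (D * exp (- (2 * PI) * u)))
      with (Rpower (k / (2 * PI / sqrt (INR N))) k * D * (exp (2 * PI * u) * exp (- (2 * PI) * u))) by ring.
    rewrite <- exp_plus. replace (2 * PI * u + - (2 * PI) * u) with 0 by ring. rewrite exp_0. ring. }
  assert (Ht0T : t0 <= T1).
  { unfold t0. destruct (Rle_dec 1 (INR N * T1)).
    - apply Rle_trans with 1. rewrite <- Rinv_1. apply Rinv_le_contravar; lra. unfold T1; lra.
    - exfalso. assert (1 <= INR N) by (apply (le_INR 1); lia). unfold T1 in n; nra. }
  destruct (continuity_ab_maj (fun s => Cmod (f (0, s))) t0 T1 Ht0T) as [Mx [HMx HMx']].
  { intros c Hc. apply Ccont_vline. destruct (Hol (0, c) ltac:(simpl; lra)) as [l Hl]. eapply Cdiff_cont; eauto. }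
  set (B := Rmax (Rmax 1 B0) (Cmod (f (0, Mx)))).
  exists B, D, T1. split. unfold T1; lra. split. unfold B. eapply Rle_trans. 2: apply Rmax_l. eapply Rle_trans. 2: apply Rmax_l. lra.
  split. unfold D. pose proof (exp_pos (2 * PI * y1)). lra. split; auto.
  intros t Ht. pose proof (Rmax_l (Rmax 1 B0) (Cmod (f (0, Mx)))). pose proof (Rmax_r (Rmax 1 B0) (Cmod (f (0, Mx)))).
  pose proof (Rmax_l 1 B0). pose proof (Rmax_r 1 B0). fold B in H, H0.
  destruct (Rle_dec t t0). { pose proof (Hsmall t ltac:(lra)). lra. }
  destruct (Rle_dec t T1). { pose proof (HMx t ltac:(lra)). simpl in H3. lra. }
  pose proof (Bd (0, t) ltac:(simpl; unfold T1 in *; lra)). lra. Qed.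

Definition Rc (g : R -> C) t := forall eps, 0 < eps -> exists del, 0 < del /\
  forall s, Rabs (s - t) < del -> Cmod (Cminus (g s) (g t)) < eps.

Lemma Rc_cont g t : Rc g t -> @continuous R_UniformSpace C_R_NormedModule g t.
Proof. intros Hc. unfold continuous. apply filterlim_locally. intros eps.
  destruct (Hc eps (cond_pos eps)) as [d [Hd0 Hd]].
  exists (mkposreal d Hd0). intros s Hs. change (Rabs (s + - t) < d) in Hs.
  apply ballCR_of. apply Hd. exact Hs. Qed.

Lemma cont_R_eps (u : R -> R) t : @continuous R_UniformSpace R_UniformSpace u t ->
  forall eps, 0 < eps -> exists del, 0 < del /\ forall s, Rabs (s - t) < del -> Rabs (u s - u t) < eps.
Proof. intros Hu eps Heps. unfold continuous in Hu.
  destruct (proj1 (filterlim_locally u (u t)) Hu (mkposreal eps Heps)) as [d Hd].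
  exists d. split. apply cond_pos. intros s Hs. apply (Hd s). exact Hs. Qed.

Lemma Rc_pair (u v : R -> R) t : @continuous R_UniformSpace R_UniformSpace u t -> @continuous R_UniformSpace R_UniformSpace v t ->
  Rc (fun s => (u s, v s)) t.
Proof. intros Hu Hv eps Heps.
  destruct (cont_R_eps u t Hu (eps/2) ltac:(lra)) as [d1 [H1 Hd1]].
  destruct (cont_R_eps v t Hv (eps/2) ltac:(lra)) as [d2 [H2 Hd2]].
  exists (Rmin d1 d2). split. apply Rmin_pos; auto. intros s Hs.
  pose proof (Rmin_l d1 d2). pose proof (Rmin_r d1 d2).
  eapply Rle_lt_trans. apply Cmod_le_sum. simpl.
  specialize (Hd1 s ltac:(lra)). specialize (Hd2 s ltac:(lra)). unfold Rminus in *. lra. Qed.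

Lemma Rc_mult g1 g2 t : Rc g1 t -> Rc g2 t -> Rc (fun s => Cmult (g1 s) (g2 s)) t.
Proof. intros H1 H2 eps Heps.
  set (m1 := Cmod (g1 t)). set (m2 := Cmod (g2 t)).
  assert (0 <= m1) by apply Cmod_ge_0. assert (0 <= m2) by apply Cmod_ge_0.
  set (e := Rmin 1 (eps / (2 * (m1 + m2 + 1)))).
  assert (He : 0 < e). { apply Rmin_pos. lra. apply Rdiv_lt_0_compat; lra. }
  assert (He1 : e <= 1) by apply Rmin_l. assert (He2 : e <= eps / (2 * (m1 + m2 + 1))) by apply Rmin_r.
  destruct (H1 e He) as [d1 [D1 Hd1]]. destruct (H2 e He) as [d2 [D2 Hd2]].
  exists (Rmin d1 d2). split. apply Rmin_pos; auto. intros s Hs.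
  pose proof (Rmin_l d1 d2). pose proof (Rmin_r d1 d2).
  specialize (Hd1 s ltac:(lra)). specialize (Hd2 s ltac:(lra)).
  replace (Cminus (Cmult (g1 s) (g2 s)) (Cmult (g1 t) (g2 t))) with
    (Cplus (Cmult (Cminus (g1 s) (g1 t)) (g2 s)) (Cmult (g1 t) (Cminus (g2 s) (g2 t)))) by ring.
  eapply Rle_lt_trans. apply Cmod_triangle. rewrite !Cmod_mult.
  assert (Cmod (g2 s) <= m2 + 1).
  { replace (g2 s) with (Cplus (Cminus (g2 s) (g2 t)) (g2 t)) by ring. eapply Rle_trans. apply Cmod_triangle. fold m2. lra. }
  pose proof (Cmod_ge_0 (Cminus (g1 s) (g1 t))). pose proof (Cmod_ge_0 (Cminus (g2 s) (g2 t))).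
  apply Rle_lt_trans with (e * (m2 + 1) + m1 * e).
  { apply Rplus_le_compat. apply Rmult_le_compat; try lra. apply Cmod_ge_0. apply Rmult_le_compat_l; lra. }
  apply Rle_lt_trans with (eps / (2 * (m1 + m2 + 1)) * (m1 + m2 + 1)). nra.
  replace (eps / (2 * (m1 + m2 + 1)) * (m1 + m2 + 1)) with (eps / 2) by (field; lra). lra. Qed.

Lemma Rc_ext g h t : (exists del, 0 < del /\ forall s, Rabs (s - t) < del -> g s = h s) -> Rc h t -> Rc g t.
Proof. intros [d [Hd E]] Hc eps Heps. destruct (Hc eps Heps) as [d' [Hd' H]].
  exists (Rmin d d'). split. apply Rmin_pos; auto. intros s Hs.
  pose proof (Rmin_l d d'). pose proof (Rmin_r d d').
  rewrite (E s ltac:(lra)), (E t ltac:(rewrite Rminus_diag, Rabs_R0; lra)). apply H. lra. Qed.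

Lemma Rc_fline (f : C -> C) t : Ccont f (0, t) -> Rc (fun s => f (0, s)) t.
Proof. intros Hc eps Heps. destruct (Hc eps Heps) as [d [Hd Hdd]]. exists d. split; auto.
  intros s Hs. apply Hdd. eapply Rle_lt_trans. apply Cmod_le_sum. simpl.
  replace (0 + - 0) with 0 by ring. rewrite Rabs_R0. unfold Rminus in Hs. lra. Qed.

Definition cpw_re y a s := exp (a * ln (sqrt (y^2 + s^2))) * cos (a * (atan (- (s / y)) + PI)).
Definition cpw_im y a s := exp (a * ln (sqrt (y^2 + s^2))) * sin (a * (atan (- (s / y)) + PI)).

Lemma cpow_w y a s : 0 < y -> 0 < s -> cpow (Cminus (0,s) (RtoC y)) a = (cpw_re y a s, cpw_im y a s).
Proof. intros Hy Hs. unfold cpow.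
  assert (Hm : Cmod (Cminus (0,s) (RtoC y)) = sqrt (y^2 + s^2)).
  { unfold Cmod, Cminus, Cplus, Copp, RtoC; simpl. f_equal. ring. }
  rewrite Hm. destruct (Req_EM_T (sqrt (y^2 + s^2)) 0) as [E|E].
  - exfalso. apply sqrt_eq_0 in E; nra.
  - cbn [ssrbool.is_left].
    assert (Ha : Carg (Cminus (0,s) (RtoC y)) = atan (- (s / y)) + PI).
    { unfold Carg, Cminus, Cplus, Copp, RtoC; simpl.
      destruct (Rlt_dec 0 (0 + - y)); [lra|]. destruct (Rlt_dec (0 + - y) 0); [|lra].
      destruct (Rle_dec 0 (s + - 0)); [|lra]. cbn [ssrbool.is_left]. f_equal. f_equal. field. lra. }
    rewrite Ha. unfold cpw_re, cpw_im, Rpower, Cmult, RtoC; simpl. f_equal; ring. Qed.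

Lemma Rc_cpow y a t : 0 < y -> 0 < t -> Rc (fun s => cpow (Cminus (0,s) (RtoC y)) a) t.
Proof. intros Hy Ht. apply (Rc_ext _ (fun s => (cpw_re y a s, cpw_im y a s))).
  { exists t. split; auto. intros s Hs. apply cpow_w; auto. apply Rabs_def2 in Hs. lra. }
  apply Rc_pair.
  - apply (@ex_derive_continuous R_AbsRing R_NormedModule). unfold cpw_re. auto_derive.
    repeat split; try lra; try nra. apply sqrt_lt_R0; nra.
  - apply (@ex_derive_continuous R_AbsRing R_NormedModule). unfold cpw_im. auto_derive.
    repeat split; try lra; try nra. apply sqrt_lt_R0; nra. Qed.

Lemma Rpower_le_base x x' a : 0 < x -> x <= x' -> 0 <= a -> Rpower x a <= Rpower x' a.
Proof. intros. unfold Rpower. apply exp_mono. apply Rmult_le_compat_l; auto. apply ln_le; auto. Qed.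

Lemma Rpower_pos x a : 0 < Rpower x a.
Proof. apply exp_pos. Qed.

Lemma psi_eq k f y l : @is_RInt_gen C_R_NormedModule (fun t => Cmult (f (0, t)) (cpow (Cminus (0, t) (RtoC y)) (k - 2)))
   (at_right 0) (Rbar_locally p_infty) l -> psi k f y = Cmult Ci l.
Proof. intros H. unfold psi, improper_0_oo. f_equal.
  apply (@is_RInt_gen_unique C_R_CompleteNormedModule). 
  apply Proper_StrongProper, at_right_proper_filter.
  apply Proper_StrongProper, Rbar_locally_filter. exact H. Qed.

Lemma psi_bound (f : C -> C) (k B D T1 : R) :
  2 < k -> 0 < T1 -> 0 <= B -> 0 <= D ->
  (forall z, 0 < snd z -> exists l, Cdiff f z l) ->
  (forall t, 0 < t -> Cmod (f (0, t)) <= B) ->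
  (forall t, T1 <= t -> Cmod (f (0, t)) <= D * exp (- (2 * PI) * t)) ->
  exists A0, 0 <= A0 /\ forall y, 0 < y -> Cmod (psi k f y) <= A0 * Rpower (1 + y) (k - 2).
Proof. intros Hk HT1 HB HD Hol Hb Hd. pose proof PI_pos3 as HPI.
  set (a := k - 2). assert (Ha : 0 < a) by (unfold a; lra).
  set (A0 := 2 * (B * Rpower 2 a + D * Rpower (a / PI) a * exp PI + B * Rpower (1 + T1) a * exp T1)).
  assert (HA0 : 0 <= A0).
  { unfold A0. pose proof (Rpower_pos 2 a). pose proof (Rpower_pos (a/PI) a). pose proof (Rpower_pos (1+T1) a).
    pose proof (exp_pos PI). pose proof (exp_pos T1).
    assert (0 <= B * Rpower 2 a) by nra. assert (0 <= D * Rpower (a / PI) a * exp PI).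
    { apply Rmult_le_pos; [|lra]. nra. }
    assert (0 <= B * Rpower (1 + T1) a * exp T1). { apply Rmult_le_pos; [|lra]. nra. } lra. }
  exists A0. split; auto. intros y Hy.
  set (P := Rpower (1 + y) a). assert (HP : 0 < P) by apply Rpower_pos.
  set (g := fun t => Cmult (f (0, t)) (cpow (Cminus (0, t) (RtoC y)) a)).
  assert (Hg : forall t, 0 < t -> Cmod (g t) <= Cmod (f (0,t)) * (Rpower (1 + t) a * P)).
  { intros t Ht. unfold g. rewrite Cmod_mult. apply Rmult_le_compat_l. apply Cmod_ge_0.
    eapply Rle_trans. apply Cmod_cpow_le.
    unfold P. rewrite Rpower_mult_distr by lra.
    apply Rpower_le_base; try lra.
    - apply Cmod_gt_0. intro E. injection E. intros. lra.
    - eapply Rle_trans. apply Cmod_le_sum. unfold Cminus, Cplus, Copp, RtoC; simpl.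
      replace (0 + - y) with (- y) by ring. replace (t + - 0) with t by ring.
      rewrite Rabs_Ropp, !Rabs_right by lra. nra. }
  set (A1 := B * Rpower 2 a + D * Rpower (a / PI) a * exp PI + B * Rpower (1 + T1) a * exp T1).
  assert (HA1 : A0 = 2 * A1) by reflexivity.
  assert (T1pos : 0 <= B * Rpower 2 a /\ 0 <= D * Rpower (a / PI) a * exp PI /\ 0 <= B * Rpower (1 + T1) a * exp T1).
  { pose proof (Rpower_pos 2 a). pose proof (Rpower_pos (a/PI) a). pose proof (Rpower_pos (1+T1) a).
    pose proof (exp_pos PI). pose proof (exp_pos T1). split. nra. split; apply Rmult_le_pos; nra. }
  destruct (improper_exists g (A1 * P)) as [l [Hl Hlb]].
  - apply Rmult_le_pos; lra.
  - intros t Ht. apply Rc_cont. unfold g. apply (Rc_mult (fun s => f (0,s)) (fun s => cpow (Cminus (0,s) (RtoC y)) a)).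
    + apply Rc_fline. destruct (Hol (0,t) ltac:(simpl; lra)) as [l0 Hl0]. eapply Cdiff_cont; eauto.
    + apply Rc_cpow; auto.
  - intros t Ht. eapply Rle_trans. apply Hg. lra.
    assert (Rpower (1 + t) a <= Rpower 2 a) by (apply Rpower_le_base; lra).
    pose proof (Hb t ltac:(lra)). pose proof (Cmod_ge_0 (f (0,t))). pose proof (Rpower_pos (1+t) a).
    apply Rle_trans with (B * (Rpower 2 a * P)).
    { apply Rmult_le_compat. apply Cmod_ge_0. apply Rmult_le_pos; lra. exact H0. apply Rmult_le_compat_r; lra. }
    destruct T1pos as [? [? ?]]. unfold A1.
    replace (B * (Rpower 2 a * P)) with ((B * Rpower 2 a) * P) by ring. apply Rmult_le_compat_r; lra.
  - intros t Ht. eapply Rle_trans. apply Hg. lra. pose proof (Cmod_ge_0 (f (0,t))). pose proof (Rpower_pos (1+t) a).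
    destruct T1pos as [X1 [X2 X3]].
    destruct (Rle_dec T1 t).
    + pose proof (Hd t r).
      pose proof (Rpower_exp_bound (1 + t) a PI ltac:(lra) Ha ltac:(lra)).
      assert (Hexp : exp (- (2 * PI) * t) * exp (PI * (1 + t)) <= exp PI * exp (- t)).
      { rewrite <- !exp_plus. apply exp_mono. nra. }
      apply Rle_trans with ((D * exp (- (2 * PI) * t)) * ((Rpower (a / PI) a * exp (PI * (1 + t))) * P)).
      { apply Rmult_le_compat; try nra; try (apply Rmult_le_compat_r; lra). }
      apply Rle_trans with ((D * Rpower (a / PI) a * exp PI) * P * exp (- t)).
      { replace (D * exp (- (2 * PI) * t) * (Rpower (a / PI) a * exp (PI * (1 + t)) * P)) with
          ((D * Rpower (a / PI) a * P) * (exp (- (2 * PI) * t) * exp (PI * (1 + t)))) by ring.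
        replace (D * Rpower (a / PI) a * exp PI * P * exp (- t)) with ((D * Rpower (a / PI) a * P) * (exp PI * exp (- t))) by ring.
        apply Rmult_le_compat_l; auto. pose proof (Rpower_pos (a/PI) a). apply Rmult_le_pos; nra. }
      pose proof (exp_pos (- t)). assert (Hx : D * Rpower (a / PI) a * exp PI <= A1) by (unfold A1; lra).
      apply Rmult_le_compat_r. lra. apply Rmult_le_compat_r; lra.
    + pose proof (Hb t ltac:(lra)).
      assert (Rpower (1 + t) a <= Rpower (1 + T1) a) by (apply Rpower_le_base; lra).
      assert (1 <= exp T1 * exp (- t)).
      { rewrite <- exp_plus. rewrite <- exp_0. apply exp_mono. lra. }
      apply Rle_trans with (B * (Rpower (1 + T1) a * P)).
      { apply Rmult_le_compat. apply Cmod_ge_0. apply Rmult_le_pos; lra. lra. apply Rmult_le_compat_r; lra. }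
      apply Rle_trans with ((B * Rpower (1 + T1) a * exp T1) * P * exp (- t)).
      { replace (B * Rpower (1 + T1) a * exp T1 * P * exp (- t)) with ((B * Rpower (1 + T1) a * P) * (exp T1 * exp (- t))) by ring.
        pose proof (Rpower_pos (1 + T1) a). replace (B * (Rpower (1 + T1) a * P)) with ((B * Rpower (1 + T1) a * P) * 1) by ring.
        apply Rmult_le_compat_l; auto. apply Rmult_le_pos; nra. }
      pose proof (exp_pos (- t)). assert (Hx : B * Rpower (1 + T1) a * exp T1 <= A1) by (unfold A1; lra).
      apply Rmult_le_compat_r. lra. apply Rmult_le_compat_r; lra.
  - rewrite (psi_eq k f y l Hl). rewrite Cmod_mult, Cmod_Ci, Rmult_1_l. fold P. rewrite HA1. lra. Qed.

Lemma CDerN_Cdiff H z l : @is_derive C_AbsRing C_NormedModule H z l -> Cdiff H z l.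
Proof. intros [_ Hd]. specialize (Hd z (fun P HP => HP)).
  intros eps Heps. destruct (Hd (mkposreal eps Heps)) as [d Hdd].
  exists d. split. apply cond_pos. intros w Hw. specialize (Hdd w (ballCmod z w d Hw)).
  change (Cmod (Cminus (Cminus (H w) (H z)) (Cmult (Cminus w z) l)) <= eps * Cmod (Cminus w z)) in Hdd.
  rewrite (Cmult_comm l (Cminus w z)). exact Hdd. Qed.

Fixpoint rsum (c : nat -> R) (n : nat) : R := match n with O => c O | S n => rsum c n + c (S n) end.

Lemma rsum_nonneg c n : (forall j, 0 <= c j) -> 0 <= rsum c n.
Proof. intros H. induction n; simpl. apply H. pose proof (H (S n)). lra. Qed.

Lemma sum_bound (c : nat -> C) (z : C) n : 1 <= Cmod z ->
  Cmod (sum_n (G := C_AbelianMonoid) (fun j => Cmult (c j) (Cpow z j)) n) <= rsum (fun j => Cmod (c j)) n * Cmod z ^ n.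
Proof. intros Hz. induction n.
  - rewrite sum_O. simpl. rewrite Cmod_mult. simpl. rewrite Cmod_1. lra.
  - rewrite sum_Sn. change (plus ?a ?b) with (Cplus a b). eapply Rle_trans. apply Cmod_triangle.
    rewrite Cmod_mult, Cmod_pow. simpl.
    pose proof (rsum_nonneg (fun j => Cmod (c j)) n (fun j => Cmod_ge_0 (c j))).
    pose proof (pow_R1_Rle (Cmod z) n Hz). pose proof (Cmod_ge_0 (c (S n))).
    assert (Cmod z ^ n <= Cmod z * Cmod z ^ n) by nra. nra. Qed.

Lemma Rpower_le_exp x a b : 1 <= x -> a <= b -> Rpower x a <= Rpower x b.
Proof. intros Hx Hab. unfold Rpower. apply exp_mono. assert (0 <= ln x).
  { rewrite <- ln_1. apply ln_le; lra. } nra. Qed.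

Lemma Pk2_bound k m N f : k = INR m + / 2 -> 5/2 < k ->
  exists K1, 0 <= K1 /\ forall x, 1 < x -> Cmod (Pk2 k m N f (0, x)) <= K1 * Rpower x (k - 5/2).
Proof. intros Hk Hk52.
  set (c := fun n : nat => Cplus
        (Cmult (RtoC (binom (k - 2) (INR n) * Rpower (INR N) (INR n)))
               (Lambda f (k - 1 - INR n)))
        (Cmult (Cmult (RtoC (binom (k - 2) (INR n + /2) * Rpower (INR N) (k - INR n - 11/4)))
                      (cpow Ci (2 * INR n - k + /2)))
               (Lambda f (k - 3/2 - INR n)))).
  exists (rsum (fun j => Cmod (c j)) (m - 2)). split. apply rsum_nonneg. intros; apply Cmod_ge_0.
  intros x Hx. unfold Pk2. fold c. rewrite Cmod_mult, Cmod_cpow_Ci, Rmult_1_l.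
  assert (Hz : Cmod (0, x) = x). { unfold Cmod; simpl. replace (0 * (0 * 1) + x * (x * 1)) with (x^2) by ring. apply sqrt_pow2; lra. }
  eapply Rle_trans. apply (sum_bound c (0,x) (m - 2)). lra. rewrite Hz.
  assert (Hm : (2 <= m)%nat). { destruct m as [|[|m]]. simpl in Hk; lra. simpl in Hk; lra. lia. }
  replace (k - 5/2) with (INR (m - 2)) by (rewrite minus_INR by auto; simpl; lra).
  rewrite Rpower_pow by lra. lra. Qed.

Theorem proposition3p2 (k : R) (m : nat) (N : nat) (f : C -> C)
  (hk : k = INR m + / 2) (hk52 : 5 / 2 < k)
  (hN0 : (0 < N)%nat) (hN4 : Nat.divide 4 N)
  (hf : cusp_form_star k N f) :
  exists Cst : R, forall x : R, 1 < x ->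
    Cmod (Cplus (Cminus (Pk2 k m N f (0, x)) (psi k f (INR N * x)))
                (Cmult (Cmult (cpow Ci (1 - 2 * k)) (psi k f (/ x)))
                       (RtoC (Rpower (sqrt (INR N) * x) (k - 5 / 2)))))
    <= Cst * Rpower x (k - 3 / 2).
Proof.
  destruct hf as [Hhol [Hg [HW Hcusp]]].
  assert (Hol : forall z, 0 < snd z -> exists l, Cdiff f z l).
  { intros z Hz. destruct (Hhol z Hz) as [l Hl]. exists l. apply CDerN_Cdiff. exact Hl. }
  assert (Per : forall x y, 0 < y -> f (x + 1, y) = f (x, y)).
  { apply (per_of_slash k f). intros z Hz. apply Hg; auto. split. reflexivity. exists 0%Z. reflexivity. }
  pose proof (small_of_cusp k f Hcusp) as Sm.
  pose proof (W_rel k N f hN0 HW) as Wr.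
  destruct (fbounds f k N ltac:(lra) hN0 Hol Per Sm Wr) as [B [D [T1 [HT1 [HB [HD [Hb Hd]]]]]]].
  destruct (psi_bound f k B D T1 ltac:(lra) HT1 HB HD Hol Hb Hd) as [A0 [HA0 Hpsi]].
  destruct (Pk2_bound k m N f hk hk52) as [K1 [HK1 HP]].
  assert (HN' : 0 < INR N) by (apply lt_0_INR; auto).
  assert (Hs : 0 < sqrt (INR N)) by (apply sqrt_lt_R0; auto).
  exists (K1 + A0 * Rpower (1 + INR N) (k - 2) + A0 * Rpower 2 (k - 2) * Rpower (sqrt (INR N)) (k - 5/2)).
  intros x Hx.
  assert (E1 : Rpower x (k - 5/2) <= Rpower x (k - 3/2)) by (apply Rpower_le_exp; lra).
  assert (E2 : Rpower x (k - 2) <= Rpower x (k - 3/2)) by (apply Rpower_le_exp; lra).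
  pose proof (Rpower_pos x (k - 3/2)).
  pose proof (HP x Hx) as T1b.
  assert (T2b : Cmod (psi k f (INR N * x)) <= A0 * Rpower (1 + INR N) (k - 2) * Rpower x (k - 3/2)).
  { eapply Rle_trans. apply Hpsi. nra.
    rewrite Rmult_assoc. apply Rmult_le_compat_l; auto.
    eapply Rle_trans. apply (Rpower_le_base (1 + INR N * x) ((1 + INR N) * x)); try lra; try nra.
    rewrite <- Rpower_mult_distr by lra.
    apply Rmult_le_compat_l. left; apply Rpower_pos. auto. }
  assert (T3b : Cmod (Cmult (Cmult (cpow Ci (1 - 2 * k)) (psi k f (/ x)))
                       (RtoC (Rpower (sqrt (INR N) * x) (k - 5 / 2)))) <=
                A0 * Rpower 2 (k - 2) * Rpower (sqrt (INR N)) (k - 5/2) * Rpower x (k - 3/2)).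
  { rewrite !Cmod_mult, Cmod_cpow_Ci, Rmult_1_l, Cmod_R, Rabs_right by (left; apply Rpower_pos).
    assert (Hix : 0 < / x < 1). { split. apply Rinv_0_lt_compat; lra. rewrite <- Rinv_1. apply Rinv_lt_contravar; lra. }
    assert (Cmod (psi k f (/ x)) <= A0 * Rpower 2 (k - 2)).
    { eapply Rle_trans. apply Hpsi. lra. apply Rmult_le_compat_l; auto. apply Rpower_le_base; lra. }
    rewrite <- Rpower_mult_distr by lra.
    pose proof (Rpower_pos (sqrt (INR N)) (k - 5/2)). pose proof (Rpower_pos x (k - 5/2)).
    pose proof (Cmod_ge_0 (psi k f (/ x))).
    apply Rle_trans with ((A0 * Rpower 2 (k - 2)) * (Rpower (sqrt (INR N)) (k - 5 / 2) * Rpower x (k - 5 / 2))).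
    apply Rmult_le_compat_r. nra. auto.
    replace (A0 * Rpower 2 (k - 2) * Rpower (sqrt (INR N)) (k - 5 / 2) * Rpower x (k - 3 / 2)) with
      ((A0 * Rpower 2 (k - 2) * Rpower (sqrt (INR N)) (k - 5 / 2)) * Rpower x (k - 3 / 2)) by ring.
    replace ((A0 * Rpower 2 (k - 2)) * (Rpower (sqrt (INR N)) (k - 5 / 2) * Rpower x (k - 5 / 2))) with
      ((A0 * Rpower 2 (k - 2) * Rpower (sqrt (INR N)) (k - 5 / 2)) * Rpower x (k - 5 / 2)) by ring.
    apply Rmult_le_compat_l; auto. pose proof (Rpower_pos 2 (k-2)). apply Rmult_le_pos; [|lra]. nra. }
  unfold Cminus. eapply Rle_trans. apply Cmod_triangle. eapply Rle_trans. apply Rplus_le_compat_r. apply Cmod_triangle.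
  rewrite Cmod_opp.
  assert (K1 * Rpower x (k - 5/2) <= K1 * Rpower x (k - 3/2)) by (apply Rmult_le_compat_l; auto).
  lra. Qed.
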